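(* Let $U$ be any consistent c.e. theory. Suppose a partial computable function $\Phi$ satisfies: for every natural number $i$, if $\mathsf W_i$ is a consistent finite extension of $U$, then $\Phi(i)$ converges to a sentence, $U\nvdash\Phi(i)$, and $\mathsf W_i\nvdash\neg\Phi(i)$. Then for every index $i$ of $U$ (i.e. $\mathsf W_i=U$) there exists an index $j$ of $U$ (i.e. $\mathsf W_j=U$) such that $U\nvdash\Phi(j)\to\Phi(i)$.
   Context: $\mathsf W_i$ denotes the $i$-th computably enumerable set (of sentences), viewed as a theory. $U$ is viewed as a set of axioms; $\mathsf W_i$ is a finite extension of $U$ if $\mathsf W_i=U\cup F$ for some finite set of sentences $F$. *)

(* Defs.v *)
(* Self-contained setting for the statement:
   - first-order classical logic in the language of arithmetic (0, S, +, *, =),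
     de Bruijn variables, natural-deduction provability;
   - an acceptable numbering of partial computable functions phi_i given by
     (codes of) unary mu-recursive programs over Cantor-paired naturals;
   - W_i = the c.e. set of sentences whose Goedel numbers lie in dom(phi_i). *)
From Stdlib Require Import Arith List.
Import ListNotations.

Definition pair (x y : nat) : nat := (x + y) * (x + y + 1) / 2 + y.

Inductive code : Type :=
| cZero | cSucc | cId | cFst | cSnd
| cComp (f g : code)
| cPair (f g : code)
| cRec  (f g : code)
| cMu   (f : code).

Inductive eval : code -> nat -> nat -> Prop :=
| ev_zero x : eval cZero x 0
| ev_succ x : eval cSucc x (S x)
| ev_id x : eval cId x x
| ev_fst a b : eval cFst (pair a b) a
| ev_snd a b : eval cSnd (pair a b) b
| ev_comp f g x y z : eval g x y -> eval f y z -> eval (cComp f g) x z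
| ev_pair f g x a b : eval f x a -> eval g x b -> eval (cPair f g) x (pair a b)
| ev_rec0 f g x y : eval f x y -> eval (cRec f g) (pair x 0) y
| ev_recS f g x n y z : eval (cRec f g) (pair x n) y ->
    eval g (pair x (pair n y)) z -> eval (cRec f g) (pair x (S n)) z
| ev_mu f x n : eval f (pair x n) 0 ->
    (forall m, m < n -> exists v, v <> 0 /\ eval f (pair x m) v) ->
    eval (cMu f) x n.

Fixpoint encode (c : code) : nat :=
  match c with
  | cZero => pair 0 0
  | cSucc => pair 1 0
  | cId => pair 2 0
  | cFst => pair 3 0
  | cSnd => pair 4 0
  | cComp f g => pair 5 (pair (encode f) (encode g))
  | cPair f g => pair 6 (pair (encode f) (encode g))
  | cRec f g => pair 7 (pair (encode f) (encode g))
  | cMu f => pair 8 (encode f)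
  end.

(* phi_i(x) converges to y.  Indices that code no program denote the empty function. *)
Definition phi (i x y : nat) : Prop := exists c, encode c = i /\ eval c x y.

Inductive term : Type :=
| var (n : nat) | zero | succ (t : term) | plus (s t : term) | mult (s t : term).

Inductive form : Type :=
| fal | eqf (s t : term) | imp (A B : form) | all (A : form).

Definition neg (A : form) : form := imp A fal.

Fixpoint tsubst (s : nat -> term) (t : term) : term :=
  match t with
  | var n => s n
  | zero => zero
  | succ t => succ (tsubst s t)
  | plus a b => plus (tsubst s a) (tsubst s b)
  | mult a b => mult (tsubst s a) (tsubst s b)
  end.

Definition tshift (t : term) : term := tsubst (fun n => var (S n)) t.

Definition up (s : nat -> term) : nat -> term :=
  fun n => match n with 0 => var 0 | S m => tshift (s m) end.

Fixpoint fsubst (s : nat -> term) (A : form) : form :=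
  match A with
  | fal => fal
  | eqf a b => eqf (tsubst s a) (tsubst s b)
  | imp A B => imp (fsubst s A) (fsubst s B)
  | all A => all (fsubst (up s) A)
  end.

Definition fshift (A : form) : form := fsubst (fun n => var (S n)) A.

Definition inst (A : form) (t : term) : form :=
  fsubst (fun n => match n with 0 => t | S m => var m end) A.

Fixpoint tclosed (k : nat) (t : term) : bool :=
  match t with
  | var n => Nat.ltb n k
  | zero => true
  | succ t => tclosed k t
  | plus a b | mult a b => tclosed k a && tclosed k b
  end.

Fixpoint fclosed (k : nat) (A : form) : bool :=
  match A with
  | fal => true
  | eqf a b => tclosed k a && tclosed k b
  | imp A B => fclosed k A && fclosed k B
  | all A => fclosed (S k) A
  end.

Definition sentence (A : form) : Prop := fclosed 0 A = true.

Inductive nd : list form -> form -> Prop :=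
| nd_ax G A : In A G -> nd G A
| nd_impI G A B : nd (A :: G) B -> nd G (imp A B)
| nd_impE G A B : nd G (imp A B) -> nd G A -> nd G B
| nd_allI G A : nd (map fshift G) A -> nd G (all A)
| nd_allE G A t : nd G (all A) -> nd G (inst A t)
| nd_raa G A : nd (neg A :: G) fal -> nd G A
| nd_refl G t : nd G (eqf t t)
| nd_eqE G A s t : nd G (eqf s t) -> nd G (inst A s) -> nd G (inst A t).

Definition theory := form -> Prop.

Definition Provable (T : theory) (A : form) : Prop :=
  exists G, (forall B, In B G -> T B) /\ nd G A.

Definition Consistent (T : theory) : Prop := ~ Provable T fal.

Fixpoint tcode (t : term) : nat :=
  match t with
  | var n => pair 0 n
  | zero => pair 1 0
  | succ t => pair 2 (tcode t)
  | plus a b => pair 3 (pair (tcode a) (tcode b))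
  | mult a b => pair 4 (pair (tcode a) (tcode b))
  end.

Fixpoint fcode (A : form) : nat :=
  match A with
  | fal => pair 0 0
  | eqf a b => pair 1 (pair (tcode a) (tcode b))
  | imp A B => pair 2 (pair (fcode A) (fcode B))
  | all A => pair 3 (fcode A)
  end.

Definition W (i : nat) : theory :=
  fun A => sentence A /\ exists y, phi i (fcode A) y.

Definition same_theory (T S : theory) : Prop := forall A, T A <-> S A.

Definition finite_extension (T U : theory) : Prop :=
  exists F : list form, (forall A, In A F -> sentence A) /\
    forall A, T A <-> (U A \/ In A F).

Definition PhiVal (p i : nat) (A : form) : Prop :=
  sentence A /\ phi p i (fcode A).

(* Main.v *)
Require Import Defs.
From Stdlib Require Import Arith List Lia Bool Classical.
Import ListNotations.

Arguments pair : simpl never.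

Fixpoint T n := match n with 0 => 0 | S n => T n + S n end.
Lemma T_spec n : 2 * T n = n * (n + 1).
Proof. induction n; simpl T; nia. Qed.
Lemma pair_T a b : pair a b = T (a + b) + b.
Proof.
  unfold pair. f_equal. rewrite <- T_spec. rewrite Nat.mul_comm. apply Nat.div_mul. lia.
Qed.
Lemma T_mono m n : m <= n -> T m <= T n.
Proof. induction 1; simpl; lia. Qed.
Lemma pair_inj a b c d : pair a b = pair c d -> a = c /\ b = d.
Proof.
  rewrite !pair_T. intro H.
  destruct (lt_eq_lt_dec (a+b) (c+d)) as [[Hl|He]|Hl].
  - assert (T (S (a+b)) <= T (c+d)) by (apply T_mono; lia). simpl in H0. lia.
  - rewrite He in H. lia.
  - assert (T (S (c+d)) <= T (a+b)) by (apply T_mono; lia). simpl in H0. lia.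
Qed.
Definition nextp (p : nat * nat) := match p with (0, b) => (S b, 0) | (S a, b) => (a, S b) end.
Definition unpair z := Nat.iter z nextp (0,0).
Definition f1 z := fst (unpair z).
Definition f2 z := snd (unpair z).
Lemma pair_unpair z : pair (f1 z) (f2 z) = z.
Proof.
  unfold f1, f2. induction z.
  - reflexivity.
  - unfold unpair in *. simpl Nat.iter. destruct (Nat.iter z nextp (0,0)) as [a b]. simpl in *.
    destruct a; simpl; rewrite !pair_T in *; rewrite ?Nat.add_0_r, ?Nat.add_succ_r in *; simpl in *. all: try lia. all: idtac.
Qed.
Lemma f1_pair a b : f1 (pair a b) = a.
Proof. pose proof (pair_unpair (pair a b)). apply pair_inj in H. tauto. Qed.
Lemma f2_pair a b : f2 (pair a b) = b.
Proof. pose proof (pair_unpair (pair a b)). apply pair_inj in H. tauto. Qed.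
Lemma f1_0 : f1 0 = 0. Proof. reflexivity. Qed.
Lemma f2_0 : f2 0 = 0. Proof. reflexivity. Qed.
Global Opaque f1 f2.

Ltac pairs := repeat (rewrite f1_pair || rewrite f2_pair).
Definition rep (f : nat -> nat) := exists c, forall x, eval c x (f x).
Definition b2n (b : bool) := if b then 1 else 0.
Definition repb (P : nat -> bool) := rep (fun z => b2n (P z)).
Definition rep2 (h : nat -> nat -> nat) := rep (fun z => h (f1 z) (f2 z)).

Lemma rep_ext f g : (forall x, f x = g x) -> rep f -> rep g.
Proof. intros H [c Hc]. exists c. intro x. rewrite <- H. apply Hc. Qed.
Lemma rep_id : rep (fun z => z).
Proof. exists cId. intro; constructor. Qed.
Lemma rep_comp1 h f : rep h -> rep f -> rep (fun x => h (f x)).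
Proof. intros [ch Hh] [cf Hf]. exists (cComp ch cf). intro x. econstructor; eauto. Qed.
Lemma rep_S : rep S.
Proof. exists cSucc. intro; constructor. Qed.
Lemma rep_f1 : rep f1.
Proof. exists cFst. intro x. rewrite <- (pair_unpair x) at 1. constructor. Qed.
Lemma rep_f2 : rep f2.
Proof. exists cSnd. intro x. rewrite <- (pair_unpair x) at 1. constructor. Qed.
Lemma rep_pairf f g : rep f -> rep g -> rep (fun x => pair (f x) (g x)).
Proof. intros [cf Hf] [cg Hg]. exists (cPair cf cg). intro x. constructor; auto. Qed.
Lemma rep_const n : rep (fun _ => n).
Proof.
  induction n.
  - exists cZero. intro; constructor.
  - apply (rep_comp1 S (fun _ => n)); auto using rep_S.
Qed.

Fixpoint R (f g : nat -> nat) (x n : nat) : nat :=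
  match n with 0 => f x | S n => g (pair x (pair n (R f g x n))) end.
Lemma rep_rec f g : rep f -> rep g -> rep (fun z => R f g (f1 z) (f2 z)).
Proof.
  intros [cf Hf] [cg Hg]. exists (cRec cf cg). intro z.
  rewrite <- (pair_unpair z) at 1. generalize (f1 z) (f2 z). intros x n.
  induction n; simpl.
  - constructor; auto.
  - econstructor; eauto.
Qed.

Lemma rep_app2 h f g : rep2 h -> rep f -> rep g -> rep (fun x => h (f x) (g x)).
Proof.
  intros H Hf Hg. eapply rep_ext; [|apply (rep_comp1 _ _ H (rep_pairf f g Hf Hg))].
  intro; simpl. rewrite f1_pair, f2_pair. reflexivity.
Qed.
Lemma rep_comp1' h f : rep h -> rep f -> rep (fun x => h (f x)).
Proof. apply rep_comp1. Qed.

Lemma rep2_pair : rep2 pair.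
Proof. unfold rep2. eapply rep_ext; [|apply rep_id]. intro. apply eq_sym, pair_unpair. Qed.

Lemma rep2_add : rep2 Nat.add.
Proof.
  unfold rep2. eapply rep_ext; [|apply (rep_rec (fun x => x) (fun w => S (f2 (f2 w))))].
  - intro z. cbv beta. generalize (f1 z) (f2 z). intros x n. induction n; simpl; pairs; lia.
  - apply rep_id.
  - apply (rep_comp1 S); [apply rep_S|]. apply (rep_comp1 f2); [apply rep_f2|]. apply rep_f2.
Qed.
Lemma rep_add f g : rep f -> rep g -> rep (fun x => f x + g x).
Proof. apply rep_app2, rep2_add. Qed.

Lemma rep2_mul : rep2 Nat.mul.
Proof.
  unfold rep2. eapply rep_ext; [|apply (rep_rec (fun x => 0) (fun w => f1 w + f2 (f2 w)))].
  - intro z. cbv beta. generalize (f1 z) (f2 z). intros x n. induction n; simpl; pairs; lia.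
  - apply rep_const.
  - apply rep_add. apply rep_f1. apply (rep_comp1 f2); [apply rep_f2|]. apply rep_f2.
Qed.
Lemma rep_mul f g : rep f -> rep g -> rep (fun x => f x * g x).
Proof. apply rep_app2, rep2_mul. Qed.

Lemma rep_pred : rep Nat.pred.
Proof.
  assert (H : rep (fun z => R (fun _ => 0) (fun w => f1 (f2 w)) (f1 z) (f2 z))).
  { apply rep_rec. apply rep_const. apply (rep_comp1 f1); [apply rep_f1|apply rep_f2]. }
  eapply rep_ext; [|apply (rep_comp1 _ (fun z => pair 0 z) H)].
  - intro z. cbv beta. rewrite f1_pair, f2_pair. destruct z; simpl; pairs; auto.
  - apply rep_pairf. apply rep_const. apply rep_id.
Qed.

Lemma rep2_sub : rep2 Nat.sub.
Proof.
  unfold rep2. eapply rep_ext; [|apply (rep_rec (fun x => x) (fun w => Nat.pred (f2 (f2 w))))].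
  - intro z. cbv beta. generalize (f1 z) (f2 z). intros x n. induction n; simpl; pairs; lia.
  - apply rep_id.
  - apply (rep_comp1 Nat.pred); [apply rep_pred|]. apply (rep_comp1 f2); [apply rep_f2|apply rep_f2].
Qed.
Lemma rep_sub f g : rep f -> rep g -> rep (fun x => f x - g x).
Proof. apply rep_app2, rep2_sub. Qed.

Lemma repb_eqb f g : rep f -> rep g -> repb (fun x => f x =? g x).
Proof.
  intros. unfold repb. eapply rep_ext with (f := fun x => 1 - ((f x - g x) + (g x - f x))).
  - intro x. unfold b2n. destruct (Nat.eqb_spec (f x) (g x)); lia.
  - apply rep_sub. apply rep_const. apply rep_add; apply rep_sub; auto.
Qed.
Lemma repb_ltb f g : rep f -> rep g -> repb (fun x => f x <? g x).
Proof.
  intros. unfold repb. eapply rep_ext with (f := fun x => 1 - (S (f x) - g x)).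
  - intro x. unfold b2n. destruct (Nat.ltb_spec (f x) (g x)); lia.
  - apply rep_sub. apply rep_const. apply rep_sub; auto. apply (rep_comp1 S); auto. apply rep_S.
Qed.
Lemma repb_andb P Q : repb P -> repb Q -> repb (fun x => P x && Q x).
Proof.
  intros. unfold repb. eapply rep_ext with (f := fun x => b2n (P x) * b2n (Q x)).
  - intro x. unfold b2n. destruct (P x), (Q x); reflexivity.
  - apply rep_mul; auto.
Qed.
Lemma repb_negb P : repb P -> repb (fun x => negb (P x)).
Proof.
  intros. unfold repb. eapply rep_ext with (f := fun x => 1 - b2n (P x)).
  - intro x. unfold b2n. destruct (P x); reflexivity.
  - apply rep_sub; auto. apply rep_const.
Qed.
Lemma repb_orb P Q : repb P -> repb Q -> repb (fun x => P x || Q x).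
Proof.
  intros. unfold repb. eapply rep_ext with (f := fun x => 1 - (1 - b2n (P x)) * (1 - b2n (Q x))).
  - intro x. unfold b2n. destruct (P x), (Q x); reflexivity.
  - apply rep_sub. apply rep_const. apply rep_mul; apply rep_sub; auto; apply rep_const.
Qed.
Lemma rep_if P f g : repb P -> rep f -> rep g -> rep (fun x => if P x then f x else g x).
Proof.
  intros. eapply rep_ext with (f := fun x => b2n (P x) * f x + (1 - b2n (P x)) * g x).
  - intro x. unfold b2n. destruct (P x); lia.
  - apply rep_add; apply rep_mul; auto. apply rep_sub; auto. apply rep_const.
Qed.
Lemma repb_const b : repb (fun _ => b).
Proof. unfold repb. apply (rep_const (b2n b)). Qed.

Fixpoint bex (k : nat) (P : nat -> bool) : bool :=
  match k with 0 => false | S k => P k || bex k P end.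
Definition ball k P := negb (bex k (fun m => negb (P m))).

Lemma repb_bex (k : nat -> nat) (P : nat -> nat -> bool) :
  rep k -> repb (fun y => P (f1 y) (f2 y)) -> repb (fun z => bex (k z) (P z)).
Proof.
  intros Hk HP.
  assert (Hg : rep (fun w => b2n (P (f1 w) (f1 (f2 w)) || (f2 (f2 w) =? 1)))).
  { apply repb_orb.
    - eapply rep_ext; [|apply (rep_comp1 _ (fun w => pair (f1 w) (f1 (f2 w))) HP)].
      + intro; simpl. rewrite f1_pair, f2_pair. reflexivity.
      + apply rep_pairf. apply rep_f1. apply (rep_comp1 f1). apply rep_f1. apply rep_f2.
    - apply repb_eqb. apply (rep_comp1 f2). apply rep_f2. apply rep_f2. apply rep_const. }
  pose proof (rep_rec (fun _ => 0) _ (rep_const 0) Hg) as H.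
  unfold repb. eapply rep_ext; [|apply (rep_comp1 _ (fun z => pair z (k z)) H)].
  - intro z. cbv beta. rewrite f1_pair, f2_pair. generalize (k z). intro n. induction n; simpl; auto.
    pairs. rewrite IHn. unfold b2n. destruct (P z n), (bex n (P z)); reflexivity.
  - apply rep_pairf; auto. apply rep_id.
Qed.
Lemma repb_ball (k : nat -> nat) (P : nat -> nat -> bool) :
  rep k -> repb (fun y => P (f1 y) (f2 y)) -> repb (fun z => ball (k z) (P z)).
Proof.
  intros. unfold ball. apply repb_negb. apply (repb_bex k (fun z m => negb (P z m))); auto.
  apply repb_negb; auto.
Qed.

Lemma rep_iter (k s : nat -> nat) (F : nat -> nat) :
  rep F -> rep k -> rep s -> rep (fun z => Nat.iter (k z) F (s z)).
Proof.
  intros HF Hk Hs.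
  assert (Hg : rep (fun w => F (f2 (f2 w)))).
  { apply (rep_comp1 F); auto. apply (rep_comp1 f2). apply rep_f2. apply rep_f2. }
  pose proof (rep_rec (fun x => x) (fun w => F (f2 (f2 w))) rep_id Hg) as H.
  eapply rep_ext; [|apply (rep_comp1 _ (fun z => pair (s z) (k z)) H)].
  - intro z. cbv beta. rewrite f1_pair, f2_pair. generalize (k z). intro n. induction n; simpl; auto.
    pairs. rewrite IHn. reflexivity.
  - apply rep_pairf; auto.
Qed.

Lemma rep_b2n P : repb P -> rep (fun z => b2n (P z)).
Proof. auto. Qed.

Ltac rep_step :=
  match goal with
  | |- rep (fun _ => ?c) => apply rep_const
  | |- repb (fun _ => ?c) => apply repb_const
  | |- rep (fun z => z) => apply rep_id
  | |- rep (fun z => pair (@?f z) (@?g z)) => apply (rep_app2 pair f g rep2_pair)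
  | |- rep (fun z => f1 (@?f z)) => apply (rep_comp1 f1 f rep_f1)
  | |- rep (fun z => f2 (@?f z)) => apply (rep_comp1 f2 f rep_f2)
  | |- rep (fun z => S (@?f z)) => apply (rep_comp1 S f rep_S)
  | |- rep (fun z => Nat.pred (@?f z)) => apply (rep_comp1 Nat.pred f rep_pred)
  | |- rep (fun z => Nat.add (@?f z) (@?g z)) => apply (rep_add f g)
  | |- rep (fun z => Nat.mul (@?f z) (@?g z)) => apply (rep_mul f g)
  | |- rep (fun z => Nat.sub (@?f z) (@?g z)) => apply (rep_sub f g)
  | |- rep (fun z => b2n (@?P z)) => apply (rep_b2n P)
  | |- rep (fun z => if @?P z then @?f z else @?g z) => apply (rep_if P f g)
  | |- rep (fun z => Nat.iter (@?k z) ?F (@?s z)) => apply (rep_iter k s F)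
  | |- rep (fun z => ?F) => is_var F; idtac
  | |- repb (fun z => Nat.eqb (@?f z) (@?g z)) => apply (repb_eqb f g)
  | |- repb (fun z => Nat.ltb (@?f z) (@?g z)) => apply (repb_ltb f g)
  | |- repb (fun z => andb (@?P z) (@?Q z)) => apply (repb_andb P Q)
  | |- repb (fun z => orb (@?P z) (@?Q z)) => apply (repb_orb P Q)
  | |- repb (fun z => negb (@?P z)) => apply (repb_negb P)
  | |- repb (fun z => bex (@?k z) (@?P z)) => apply (repb_bex k P); cbv beta
  | |- repb (fun z => ball (@?k z) (@?P z)) => apply (repb_ball k P); cbv beta
  | |- rep (fun z => (fun y => @?F y) z) => cbv beta
  end.
Ltac rep_auto := repeat rep_step.

Example test : repb (fun z => ball (f1 z) (fun m => bex m (fun i => (i + f2 z =? m) && negb (i <? 3)))).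
Proof. rep_auto. Qed.
Example test2 : rep (fun z => Nat.iter z (fun c => f2 (Nat.pred c)) (S z)).
Proof. rep_auto. Qed.

Ltac pinj H := let H1 := fresh in let H2 := fresh in
  apply pair_inj in H; destruct H as [H1 H2]; try discriminate H1; try subst.

Lemma eval_rec_det f g (IHf : forall x y y', eval f x y -> eval f x y' -> y = y')
  (IHg : forall x y y', eval g x y -> eval g x y' -> y = y') :
  forall n x y y', eval (cRec f g) (pair x n) y -> eval (cRec f g) (pair x n) y' -> y = y'.
Proof.
  induction n; intros x y y' H1 H2; inversion H1; subst; inversion H2; subst;
   repeat match goal with H : pair _ _ = pair _ _ |- _ => apply pair_inj in H; destruct H; subst end;
   try lia; eauto.
  match goal with H : S _ = S _ |- _ => injection H; intro; subst end.
  match goal with H : S _ = S _ |- _ => injection H; intro; subst end.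
  assert (y0 = y1) by eauto. subst. eauto.
Qed.

Lemma eval_det c : forall x y y', eval c x y -> eval c x y' -> y = y'.
Proof.
  induction c; intros x y y' H1 H2.
  8: { inversion H1; subst; eapply (eval_rec_det c1 c2 IHc1 IHc2); eauto. }
  all: inversion H1; subst; inversion H2; subst;
   repeat match goal with H : pair _ _ = pair _ _ |- _ => apply pair_inj in H; destruct H; subst end;
   auto.
  - assert (y0 = y1) by eauto. subst. eauto.
  - f_equal; eauto.
  - destruct (lt_eq_lt_dec y y') as [[Hl|He]|Hl]; auto;
    match goal with Hl : ?a < ?b, H : forall m, m < ?b -> _ |- _ => destruct (H a Hl) as [v [Hv Hev]] end;
    assert (v = 0) by eauto; contradiction.
Qed.

Lemma encode_inj c : forall c', encode c = encode c' -> c = c'.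
Proof.
  induction c; destruct c'; simpl; intro H; pinj H; auto;
  repeat match goal with H : pair _ _ = pair _ _ |- _ => apply pair_inj in H; destruct H end;
  try discriminate; try (f_equal; auto).
Qed.

Lemma tcode_inj t : forall t', tcode t = tcode t' -> t = t'.
Proof.
  induction t; destruct t'; simpl; intro H; pinj H; auto;
  repeat match goal with H : pair _ _ = pair _ _ |- _ => apply pair_inj in H; destruct H end;
  try discriminate; try (f_equal; auto).
Qed.

Lemma fcode_inj A : forall A', fcode A = fcode A' -> A = A'.
Proof.
  induction A; destruct A'; simpl; intro H; pinj H; auto;
  repeat match goal with H : pair _ _ = pair _ _ |- _ => apply pair_inj in H; destruct H end;
  try discriminate; try (f_equal; auto using tcode_inj).
Qed.

Lemma phi_det i x y y' : phi i x y -> phi i x y' -> y = y'.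
Proof.
  intros [c [Hc H]] [c' [Hc' H']]. subst. apply encode_inj in Hc'. subst. eapply eval_det; eauto.
Qed.

Lemma bex_iff k P : bex k P = true <-> exists m, m < k /\ P m = true.
Proof.
  induction k; simpl.
  - split; [discriminate|]. intros [m [Hm _]]; lia.
  - rewrite orb_true_iff, IHk. split.
    + intros [H|[m [Hm H]]]; [exists k|exists m]; split; auto; lia.
    + intros [m [Hm H]]. destruct (Nat.eq_dec m k); [subst; auto|right; exists m; split; auto; lia].
Qed.
Lemma ball_iff k P : ball k P = true <-> forall m, m < k -> P m = true.
Proof.
  unfold ball. rewrite negb_true_iff. split.
  - intros H m Hm. destruct (P m) eqn:E; auto.
    assert (bex k (fun m => negb (P m)) = true) by (apply bex_iff; exists m; rewrite E; auto). congruence.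
  - intros H. destruct (bex k _) eqn:E; auto. apply bex_iff in E. destruct E as [m [Hm E]].
    rewrite H in E; [discriminate|auto].
Qed.

Fixpoint encl (l : list nat) : nat := match l with [] => 0 | a :: l => S (pair a (encl l)) end.
Definition nthc m c := f1 (Nat.pred (Nat.iter m (fun c => f2 (Nat.pred c)) c)).
Lemma nthc_encl l : forall m, m < length l -> nthc m (encl l) = nth m l 0.
Proof.
  induction l; simpl; intros m Hm; [lia|]. destruct m.
  - unfold nthc. simpl. apply f1_pair.
  - unfold nthc in *. rewrite Nat.iter_succ_r. simpl. rewrite f2_pair. apply IHl. lia.
Qed.

Definition prem5 f a b c d := pair f (pair a (pair b (pair c d))).

Section Engine.
Variable Loc0 : nat -> bool.
Variable Loc : nat -> bool.

Inductive Der : nat -> Prop :=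
| Der0 f : Loc0 f = true -> Der f
| DerS f a b c d : Der a -> Der b -> Der c -> Der d -> Loc (prem5 f a b c d) = true -> Der f.

Definition validb k c := ball k (fun m => Loc0 (nthc m c) ||
  bex m (fun i1 => bex m (fun i2 => bex m (fun i3 => bex m (fun i4 =>
    Loc (pair (nthc m c) (pair (nthc i1 c) (pair (nthc i2 c) (pair (nthc i3 c) (nthc i4 c)))))))))).
Definition memb f k c := bex k (fun m => nthc m c =? f).

Lemma validb_Der k c : validb k c = true -> forall m, m < k -> Der (nthc m c).
Proof.
  intros H m. induction m as [m IH] using (well_founded_induction lt_wf). intro Hm.
  unfold validb in H. rewrite ball_iff in H. specialize (H m Hm). apply orb_true_iff in H.
  destruct H as [H|H]; [apply Der0; auto|].
  apply bex_iff in H; destruct H as [i1 [H1 H]].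
  apply bex_iff in H; destruct H as [i2 [H2 H]].
  apply bex_iff in H; destruct H as [i3 [H3 H]].
  apply bex_iff in H; destruct H as [i4 [H4 H]].
  eapply DerS; [| | | | exact H]; apply IH; lia.
Qed.

Lemma memb_Der f k c : validb k c = true -> memb f k c = true -> Der f.
Proof.
  intros Hv Hm. apply bex_iff in Hm. destruct Hm as [m [Hm E]]. apply Nat.eqb_eq in E. subst.
  eapply validb_Der; eauto.
Qed.

Definition validL l := forall m, m < length l -> Loc0 (nth m l 0) = true \/
  exists i1 i2 i3 i4, i1 < m /\ i2 < m /\ i3 < m /\ i4 < m /\
   Loc (prem5 (nth m l 0) (nth i1 l 0) (nth i2 l 0) (nth i3 l 0) (nth i4 l 0)) = true.

Lemma validL_validb l : validL l -> validb (length l) (encl l) = true.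
Proof.
  intro H. unfold validb. apply ball_iff. intros m Hm. apply orb_true_iff.
  rewrite nthc_encl by auto. destruct (H m Hm) as [E|[i1 [i2 [i3 [i4 [H1 [H2 [H3 [H4 E]]]]]]]]]; [left; auto|right].
  apply bex_iff; exists i1; split; auto.
  apply bex_iff; exists i2; split; auto.
  apply bex_iff; exists i3; split; auto.
  apply bex_iff; exists i4; split; auto.
  rewrite !nthc_encl by lia. exact E.
Qed.

Lemma validL_app l1 l2 : validL l1 -> validL l2 -> validL (l1 ++ l2).
Proof.
  intros H1 H2 m Hm. rewrite length_app in Hm. destruct (Nat.lt_ge_cases m (length l1)).
  - rewrite app_nth1 by auto. destruct (H1 m H) as [E|[i1 [i2 [i3 [i4 [J1 [J2 [J3 [J4 E]]]]]]]]]; [left; auto|right].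
    exists i1, i2, i3, i4. rewrite !app_nth1 by lia. auto.
  - rewrite app_nth2 by auto. destruct (H2 (m - length l1)) as [E|[i1 [i2 [i3 [i4 [J1 [J2 [J3 [J4 E]]]]]]]]];
    [lia|left; auto|right].
    exists (i1 + length l1), (i2 + length l1), (i3 + length l1), (i4 + length l1).
    rewrite !app_nth2 by lia. rewrite !Nat.add_sub. repeat split; try lia. exact E.
Qed.

Lemma validL_snoc l f : validL l -> (exists i1 i2 i3 i4, i1 < length l /\ i2 < length l /\
   i3 < length l /\ i4 < length l /\
   Loc (prem5 f (nth i1 l 0) (nth i2 l 0) (nth i3 l 0) (nth i4 l 0)) = true) -> validL (l ++ [f]).
Proof.
  intros H [i1 [i2 [i3 [i4 [J1 [J2 [J3 [J4 E]]]]]]]] m Hm. rewrite length_app in Hm; simpl in Hm.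
  destruct (Nat.lt_ge_cases m (length l)).
  - rewrite app_nth1 by auto. destruct (H m H0) as [E'|[k1 [k2 [k3 [k4 [K1 [K2 [K3 [K4 E']]]]]]]]]; [left; auto|right].
    exists k1, k2, k3, k4. rewrite !app_nth1 by lia. auto.
  - assert (m = length l) by lia. subst. right. exists i1, i2, i3, i4.
    rewrite nth_middle. rewrite !app_nth1 by lia. repeat split; auto.
Qed.

Lemma Der_validL f : Der f -> exists l, validL l /\ In f l.
Proof.
  induction 1.
  - exists [f]. split; [|simpl; auto]. intros m Hm. simpl in Hm. assert (m = 0) by lia. subst. left. exact H.
  - destruct IHDer1 as [l1 [V1 I1]], IHDer2 as [l2 [V2 I2]], IHDer3 as [l3 [V3 I3]], IHDer4 as [l4 [V4 I4]].
    set (l := l1 ++ l2 ++ l3 ++ l4).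
    assert (Vl : validL l) by (repeat apply validL_app; auto).
    assert (Il : forall x, In x l1 \/ In x l2 \/ In x l3 \/ In x l4 -> exists i, i < length l /\ nth i l 0 = x).
    { intros x Hx. assert (Hx' : In x l) by (unfold l; rewrite !in_app_iff; tauto).
      apply In_nth with (d := 0) in Hx'. destruct Hx' as [i [? ?]]. eauto. }
    destruct (Il a) as [ia [Ja Ea]]; auto.
    destruct (Il b) as [ib [Jb Eb]]; auto.
    destruct (Il c) as [ic [Jc Ec]]; auto.
    destruct (Il d) as [id [Jd Ed]]; auto.
    exists (l ++ [f]). split; [|rewrite in_app_iff; simpl; auto].
    apply validL_snoc; auto. exists ia, ib, ic, id. subst. auto 10.
Qed.

Lemma Der_witness3 f g h : Der f -> Der g -> Der h -> exists k c, validb k c = true /\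
  memb f k c = true /\ memb g k c = true /\ memb h k c = true.
Proof.
  intros Hf Hg Hh. apply Der_validL in Hf, Hg, Hh.
  destruct Hf as [l1 [V1 I1]], Hg as [l2 [V2 I2]], Hh as [l3 [V3 I3]].
  exists (length (l1 ++ l2 ++ l3)), (encl (l1 ++ l2 ++ l3)).
  assert (V : validL (l1 ++ l2 ++ l3)) by (repeat apply validL_app; auto).
  split; [apply validL_validb; auto|].
  assert (M : forall x, In x (l1 ++ l2 ++ l3) -> memb x (length (l1 ++ l2 ++ l3)) (encl (l1 ++ l2 ++ l3)) = true).
  { intros x Hx. apply In_nth with (d := 0) in Hx. destruct Hx as [i [Hi E]].
    apply bex_iff. exists i. split; auto. rewrite nthc_encl by auto. apply Nat.eqb_eq; auto. }
  repeat split; apply M; rewrite !in_app_iff; tauto.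
Qed.

End Engine.

Definition mk t v1 v2 v3 v4 v5 := pair t (pair v1 (pair v2 (pair v3 (pair v4 v5)))).
Definition tg f := f1 f.
Definition F1 f := f1 (f2 f).
Definition F2 f := f1 (f2 (f2 f)).
Definition F3 f := f1 (f2 (f2 (f2 f))).
Definition F4 f := f1 (f2 (f2 (f2 (f2 f)))).
Definition F5 f := f2 (f2 (f2 (f2 (f2 f)))).

Definition sigc d k u n := if n <? d then pair 0 n else if k =? 0 then pair 0 (S n)
   else if n =? d then u else pair 0 (Nat.pred n).

Definition L_EV0 f := (tg f =? 0) && (F1 f =? pair 0 0) && (F3 f =? 0).
Definition L_EV1 f := (tg f =? 0) && (F1 f =? pair 1 0) && (F3 f =? S (F2 f)).
Definition L_EV2 f := (tg f =? 0) && (F1 f =? pair 2 0) && (F3 f =? F2 f).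
Definition L_EV3 f := (tg f =? 0) && (F1 f =? pair 3 0) && (F3 f =? f1 (F2 f)).
Definition L_EV4 f := (tg f =? 0) && (F1 f =? pair 4 0) && (F3 f =? f2 (F2 f)).
Definition L_MU0 f := (tg f =? 1) && (F3 f =? 0).
Definition L_TSvar f := (tg f =? 2) && (f1 (F4 f) =? 0) && (F5 f =? sigc (F2 f) (F1 f) (F3 f) (f2 (F4 f))).
Definition L_TSzero f := (tg f =? 2) && (F4 f =? pair 1 0) && (F5 f =? pair 1 0).
Definition L_FSfal f := (tg f =? 3) && (F4 f =? pair 0 0) && (F5 f =? pair 0 0).
Definition L_SCnil f := (tg f =? 4) && (F1 f =? 0) && (F2 f =? 0).
Definition L_TCLvar f := (tg f =? 6) && (f1 (F2 f) =? 0) && (f2 (F2 f) <? F1 f).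
Definition L_TCLzero f := (tg f =? 6) && (F2 f =? pair 1 0).
Definition L_FCLfal f := (tg f =? 7) && (F2 f =? pair 0 0).
Definition L_SUnil f := (tg f =? 8) && (F2 f =? 0).

Definition leafs : list (nat -> bool) := [L_EV0; L_EV1; L_EV2; L_EV3; L_EV4; L_MU0; L_TSvar; L_TSzero;
  L_FSfal; L_SCnil; L_TCLvar; L_TCLzero; L_FCLfal; L_SUnil].

Definition R_EVcomp f a b (c d : nat) := (tg f =? 0) && (f1 (F1 f) =? 5) &&
  (a =? mk 0 (f2 (f2 (F1 f))) (F2 f) (F3 a) 0 0) && (b =? mk 0 (f1 (f2 (F1 f))) (F3 a) (F3 f) 0 0).
Definition R_EVpair f a b (c d : nat) := (tg f =? 0) && (f1 (F1 f) =? 6) &&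
  (a =? mk 0 (f1 (f2 (F1 f))) (F2 f) (f1 (F3 f)) 0 0) && (b =? mk 0 (f2 (f2 (F1 f))) (F2 f) (f2 (F3 f)) 0 0).
Definition R_EVrec0 f a (b c d : nat) := (tg f =? 0) && (f1 (F1 f) =? 7) && (f2 (F2 f) =? 0) &&
  (a =? mk 0 (f1 (f2 (F1 f))) (f1 (F2 f)) (F3 f) 0 0).
Definition R_EVrecS f a b (c d : nat) := (tg f =? 0) && (f1 (F1 f) =? 7) && negb (f2 (F2 f) =? 0) &&
  (a =? mk 0 (F1 f) (pair (f1 (F2 f)) (Nat.pred (f2 (F2 f)))) (F3 a) 0 0) &&
  (b =? mk 0 (f2 (f2 (F1 f))) (pair (f1 (F2 f)) (pair (Nat.pred (f2 (F2 f))) (F3 a))) (F3 f) 0 0).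
Definition R_EVmu f a b (c d : nat) := (tg f =? 0) && (f1 (F1 f) =? 8) &&
  (a =? mk 0 (f2 (F1 f)) (pair (F2 f) (F3 f)) 0 0 0) && (b =? mk 1 (f2 (F1 f)) (F2 f) (F3 f) 0 0).
Definition R_MUS f a b (c d : nat) := (tg f =? 1) && negb (F3 f =? 0) &&
  (a =? mk 1 (F1 f) (F2 f) (Nat.pred (F3 f)) 0 0) &&
  (b =? mk 0 (F1 f) (pair (F2 f) (Nat.pred (F3 f))) (F3 b) 0 0) && negb (F3 b =? 0).
Definition R_TSsucc f a (b c d : nat) := (tg f =? 2) && (f1 (F4 f) =? 2) && (f1 (F5 f) =? 2) &&
  (a =? mk 2 (F1 f) (F2 f) (F3 f) (f2 (F4 f)) (f2 (F5 f))).
Definition R_TSbin (n : nat) f a b (c d : nat) := (tg f =? 2) && (f1 (F4 f) =? n) && (f1 (F5 f) =? n) &&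
  (a =? mk 2 (F1 f) (F2 f) (F3 f) (f1 (f2 (F4 f))) (f1 (f2 (F5 f)))) &&
  (b =? mk 2 (F1 f) (F2 f) (F3 f) (f2 (f2 (F4 f))) (f2 (f2 (F5 f)))).
Definition R_FSeq f a b (c d : nat) := (tg f =? 3) && (f1 (F4 f) =? 1) && (f1 (F5 f) =? 1) &&
  (a =? mk 2 (F1 f) (F2 f) (F3 f) (f1 (f2 (F4 f))) (f1 (f2 (F5 f)))) &&
  (b =? mk 2 (F1 f) (F2 f) (F3 f) (f2 (f2 (F4 f))) (f2 (f2 (F5 f)))).
Definition R_FSimp f a b (c d : nat) := (tg f =? 3) && (f1 (F4 f) =? 2) && (f1 (F5 f) =? 2) &&
  (a =? mk 3 (F1 f) (F2 f) (F3 f) (f1 (f2 (F4 f))) (f1 (f2 (F5 f)))) &&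
  (b =? mk 3 (F1 f) (F2 f) (F3 f) (f2 (f2 (F4 f))) (f2 (f2 (F5 f)))).
Definition R_FSall f a b (c d : nat) := (tg f =? 3) && (f1 (F4 f) =? 3) && (f1 (F5 f) =? 3) &&
  (a =? mk 3 (F1 f) (S (F2 f)) (F5 b) (f2 (F4 f)) (f2 (F5 f))) &&
  (b =? mk 2 0 0 0 (F3 f) (F5 b)).
Definition R_SCcons f a b (c d : nat) := (tg f =? 4) && negb (F1 f =? 0) && negb (F2 f =? 0) &&
  (a =? mk 3 0 0 (pair 1 0) (f1 (Nat.pred (F1 f))) (f1 (Nat.pred (F2 f)))) &&
  (b =? mk 4 (f2 (Nat.pred (F1 f))) (f2 (Nat.pred (F2 f))) 0 0 0).
Definition R_MEMhd f a (b c d : nat) := (tg f =? 5) && negb (F2 f =? 0) &&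
  (f1 (Nat.pred (F2 f)) =? F1 f) && (a =? mk 4 (F2 f) (F2 a) 0 0 0).
Definition R_MEMtl f a b (c d : nat) := (tg f =? 5) && negb (F2 f =? 0) &&
  (a =? mk 5 (F1 f) (f2 (Nat.pred (F2 f))) 0 0 0) && (b =? mk 4 (F2 f) (F2 b) 0 0 0).
Definition R_TCLsucc f a (b c d : nat) := (tg f =? 6) && (f1 (F2 f) =? 2) &&
  (a =? mk 6 (F1 f) (f2 (F2 f)) 0 0 0).
Definition R_TCLbin (n : nat) f a b (c d : nat) := (tg f =? 6) && (f1 (F2 f) =? n) &&
  (a =? mk 6 (F1 f) (f1 (f2 (F2 f))) 0 0 0) && (b =? mk 6 (F1 f) (f2 (f2 (F2 f))) 0 0 0).
Definition R_FCLeq f a b (c d : nat) := (tg f =? 7) && (f1 (F2 f) =? 1) &&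
  (a =? mk 6 (F1 f) (f1 (f2 (F2 f))) 0 0 0) && (b =? mk 6 (F1 f) (f2 (f2 (F2 f))) 0 0 0).
Definition R_FCLimp f a b (c d : nat) := (tg f =? 7) && (f1 (F2 f) =? 2) &&
  (a =? mk 7 (F1 f) (f1 (f2 (F2 f))) 0 0 0) && (b =? mk 7 (F1 f) (f2 (f2 (F2 f))) 0 0 0).
Definition R_FCLall f a (b c d : nat) := (tg f =? 7) && (f1 (F2 f) =? 3) &&
  (a =? mk 7 (S (F1 f)) (f2 (F2 f)) 0 0 0).
Definition R_SUcons f a b c (d : nat) := (tg f =? 8) && negb (F2 f =? 0) &&
  (a =? mk 8 (F1 f) (f2 (Nat.pred (F2 f))) 0 0 0) && (b =? mk 7 0 (f1 (Nat.pred (F2 f))) 0 0 0) &&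
  (c =? mk 0 (F1 f) (f1 (Nat.pred (F2 f))) (F3 c) 0 0).
Definition R_NDax f a (b c d : nat) := (tg f =? 9) && (a =? mk 5 (F2 f) (F1 f) 0 0 0).
Definition R_NDimpI f a (b c d : nat) := (tg f =? 9) && (f1 (F2 f) =? 2) &&
  (a =? mk 9 (S (pair (f1 (f2 (F2 f))) (F1 f))) (f2 (f2 (F2 f))) 0 0 0).
Definition R_NDimpE f a b (c d : nat) := (tg f =? 9) && (b =? mk 9 (F1 f) (F2 b) 0 0 0) &&
  (a =? mk 9 (F1 f) (pair 2 (pair (F2 b) (F2 f))) 0 0 0).
Definition R_NDallI f a b (c d : nat) := (tg f =? 9) && (f1 (F2 f) =? 3) &&
  (a =? mk 4 (F1 f) (F2 a) 0 0 0) && (b =? mk 9 (F2 a) (f2 (F2 f)) 0 0 0).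
Definition R_NDallE f a b c (d : nat) := (tg f =? 9) && (b =? mk 3 1 0 (F3 b) (F4 b) (F2 f)) &&
  (a =? mk 9 (F1 f) (pair 3 (F4 b)) 0 0 0) && (c =? mk 2 0 0 0 (F3 b) (F5 c)).
Definition R_NDraa f a (b c d : nat) := (tg f =? 9) &&
  (a =? mk 9 (S (pair (pair 2 (pair (F2 f) (pair 0 0))) (F1 f))) (pair 0 0) 0 0 0).
Definition R_NDrefl f a b (c d : nat) := (tg f =? 9) && (f1 (F2 f) =? 1) &&
  (f1 (f2 (F2 f)) =? f2 (f2 (F2 f))) && (a =? mk 2 0 0 0 (f1 (f2 (F2 f))) (F5 a)) &&
  (b =? mk 4 (F1 f) (F2 b) 0 0 0).
Definition R_NDeqE f a b c (d : nat) := (tg f =? 9) && (f1 (F2 a) =? 1) &&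
  (a =? mk 9 (F1 f) (F2 a) 0 0 0) && (b =? mk 9 (F1 f) (F2 b) 0 0 0) &&
  (c =? mk 10 (f1 (f2 (F2 a))) (f2 (f2 (F2 a))) (F2 b) (F2 f) 0).
Definition R_SB f a b (c d : nat) := (tg f =? 10) &&
  (a =? mk 3 1 0 (F1 f) (F4 a) (F3 f)) && (b =? mk 3 1 0 (F2 f) (F4 a) (F4 f)).

Definition rules : list (nat -> nat -> nat -> nat -> nat -> bool) :=
  [R_EVcomp; R_EVpair; R_EVrec0; R_EVrecS; R_EVmu; R_MUS; R_TSsucc; R_TSbin 3; R_TSbin 4;
   R_FSeq; R_FSimp; R_FSall; R_SCcons; R_MEMhd; R_MEMtl; R_TCLsucc; R_TCLbin 3; R_TCLbin 4;
   R_FCLeq; R_FCLimp; R_FCLall; R_SUcons; R_NDax; R_NDimpI; R_NDimpE; R_NDallI; R_NDallE;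
   R_NDraa; R_NDrefl; R_NDeqE; R_SB].

Definition Loc0 f := existsb (fun r => r f) leafs.
Definition Loc z := existsb (fun r => r (f1 z) (f1 (f2 z)) (f1 (f2 (f2 z))) (f1 (f2 (f2 (f2 z)))) (f2 (f2 (f2 (f2 z))))) rules.

Lemma repb_Loc0 : repb Loc0.
Proof.
  unfold repb. cbv [Loc0 existsb leafs L_EV0 L_EV1 L_EV2 L_EV3 L_EV4 L_MU0 L_TSvar L_TSzero
   L_FSfal L_SCnil L_TCLvar L_TCLzero L_FCLfal L_SUnil tg F1 F2 F3 F4 F5 mk sigc].
  rep_auto.
Qed.
Lemma repb_Loc : repb Loc.
Proof.
  unfold repb. cbv [Loc existsb rules R_EVcomp R_EVpair R_EVrec0 R_EVrecS R_EVmu R_MUS R_TSsucc R_TSbin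
   R_FSeq R_FSimp R_FSall R_SCcons R_MEMhd R_MEMtl R_TCLsucc R_TCLbin R_FCLeq R_FCLimp R_FCLall
   R_SUcons R_NDax R_NDimpI R_NDimpE R_NDallI R_NDallE R_NDraa R_NDrefl R_NDeqE R_SB tg F1 F2 F3 F4 F5 mk].
  rep_auto.
Qed.

Lemma tg_mk t a b c d e : tg (mk t a b c d e) = t. Proof. unfold tg, mk. pairs. auto. Qed.
Lemma F1_mk t a b c d e : F1 (mk t a b c d e) = a. Proof. unfold F1, mk. pairs. auto. Qed.
Lemma F2_mk t a b c d e : F2 (mk t a b c d e) = b. Proof. unfold F2, mk. pairs. auto. Qed.
Lemma F3_mk t a b c d e : F3 (mk t a b c d e) = c. Proof. unfold F3, mk. pairs. auto. Qed.
Lemma F4_mk t a b c d e : F4 (mk t a b c d e) = d. Proof. unfold F4, mk. pairs. auto. Qed.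
Lemma F5_mk t a b c d e : F5 (mk t a b c d e) = e. Proof. unfold F5, mk. pairs. auto. Qed.
#[export] Hint Rewrite tg_mk F1_mk F2_mk F3_mk F4_mk F5_mk f1_pair f2_pair : mkdb.
Lemma unp v : v = pair (f1 v) (f2 v). Proof. symmetry; apply pair_unpair. Qed.
Lemma mk_eta f : f = mk (tg f) (F1 f) (F2 f) (F3 f) (F4 f) (F5 f).
Proof. unfold mk, tg, F1, F2, F3, F4, F5.
  rewrite (pair_unpair (f2 (f2 (f2 (f2 f))))), (pair_unpair (f2 (f2 (f2 f)))),
    (pair_unpair (f2 (f2 f))), (pair_unpair (f2 f)), (pair_unpair f). reflexivity. Qed.

Definition sig d k (U : term) n := if n <? d then var n else if k =? 0 then var (S n)
   else if n =? d then U else var (Nat.pred n).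

Lemma tsubst_ext s s' t : (forall n, s n = s' n) -> tsubst s t = tsubst s' t.
Proof. intro H; induction t; simpl; f_equal; auto. Qed.
Lemma up_ext s s' : (forall n, s n = s' n) -> forall n, up s n = up s' n.
Proof. intros H [|n]; simpl; auto. rewrite H. auto. Qed.
Lemma fsubst_ext A : forall s s', (forall n, s n = s' n) -> fsubst s A = fsubst s' A.
Proof.
  induction A; intros sb sb' H; simpl; f_equal; auto using tsubst_ext.
  apply IHA. apply up_ext. auto.
Qed.
Lemma up_sig d k U n : up (sig d k U) n = sig (S d) k (tshift U) n.
Proof.
  destruct n as [|m]; unfold sig; simpl; auto.
  repeat match goal with |- context [?a <? ?b] => destruct (Nat.ltb_spec a b)
    | |- context [?a =? ?b] => destruct (Nat.eqb_spec a b) end; unfold tshift; simpl; try lia; auto.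
  destruct m; [lia|]. reflexivity.
Qed.
Lemma fsubst_all_sig d k U A : fsubst (sig d k U) (all A) = all (fsubst (sig (S d) k (tshift U)) A).
Proof. simpl. f_equal. apply fsubst_ext. apply up_sig. Qed.
Lemma tshift_sig U t : tshift t = tsubst (sig 0 0 U) t.
Proof. apply tsubst_ext. intro n. reflexivity. Qed.
Lemma fshift_sig U A : fshift A = fsubst (sig 0 0 U) A.
Proof. apply fsubst_ext. intro n. reflexivity. Qed.
Lemma inst_sig A T : inst A T = fsubst (sig 0 1 T) A.
Proof. apply fsubst_ext. intros [|n]; reflexivity. Qed.
Lemma tcode_sig d k U u n : (k = 0 \/ tcode U = u) -> tcode (sig d k U n) = sigc d k u n.
Proof.
  intro H. unfold sig, sigc. destruct (n <? d); auto. destruct (Nat.eqb_spec k 0); auto.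
  destruct (n =? d); auto. destruct H; [lia|auto].
Qed.

Definition InvEV c x y := forall C, encode C = c -> eval C x y.
Definition InvMU f x n := forall C, encode C = f -> forall m, m < n -> exists v, v <> 0 /\ eval C (pair x m) v.
Definition InvTS k d u a a' := exists t, tcode t = a /\
   forall U, (k = 0 \/ tcode U = u) -> a' = tcode (tsubst (sig d k U) t).
Definition InvFS k d u a a' := exists X, fcode X = a /\
   forall U, (k = 0 \/ tcode U = u) -> a' = fcode (fsubst (sig d k U) X).
Definition ctx G := encl (map fcode G).
Definition InvSC g g' := exists G, ctx G = g /\ g' = ctx (map fshift G).
Definition InvMEM a g := exists G X, ctx G = g /\ fcode X = a /\ In X G.
Definition InvTCL k a := exists t, tcode t = a /\ tclosed k t = true.
Definition InvFCL k a := exists X, fcode X = a /\ fclosed k X = true.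
Definition InvSU e g := exists G, ctx G = g /\ forall B, In B G -> sentence B /\
   exists y, forall C, encode C = e -> eval C (fcode B) y.
Definition InvND g X := exists G Y, ctx G = g /\ fcode Y = X /\ nd G Y.
Definition InvSB s t A1 A2 := exists Y, forall S T, tcode S = s -> tcode T = t ->
   A1 = fcode (inst Y S) /\ A2 = fcode (inst Y T).

Definition Inv f : Prop := match tg f with
 | 0 => InvEV (F1 f) (F2 f) (F3 f)
 | 1 => InvMU (F1 f) (F2 f) (F3 f)
 | 2 => InvTS (F1 f) (F2 f) (F3 f) (F4 f) (F5 f)
 | 3 => InvFS (F1 f) (F2 f) (F3 f) (F4 f) (F5 f)
 | 4 => InvSC (F1 f) (F2 f)
 | 5 => InvMEM (F1 f) (F2 f)
 | 6 => InvTCL (F1 f) (F2 f)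
 | 7 => InvFCL (F1 f) (F2 f)
 | 8 => InvSU (F1 f) (F2 f)
 | 9 => InvND (F1 f) (F2 f)
 | 10 => InvSB (F1 f) (F2 f) (F3 f) (F4 f)
 | _ => True end.

Ltac bdes := repeat match goal with
 | H : (_ && _) = true |- _ => apply andb_true_iff in H; destruct H
 | H : (_ =? _) = true |- _ => apply Nat.eqb_eq in H
 | H : negb _ = true |- _ => apply negb_true_iff in H
 | H : (_ =? _) = false |- _ => apply Nat.eqb_neq in H
 | H : (_ <? _) = true |- _ => apply Nat.ltb_lt in H
 end.

Ltac useinv H E := rewrite E in H; unfold Inv in H; autorewrite with mkdb in H; cbv beta iota in H.
Ltac goalinv E := unfold Inv; rewrite E; cbv beta iota.

Lemma ctx_inj G : forall G', ctx G = ctx G' -> G = G'.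
Proof.
  unfold ctx. induction G; destruct G'; simpl; intro H; auto; try discriminate.
  injection H; intro H'. apply pair_inj in H'. destruct H'. f_equal; auto using fcode_inj.
Qed.
Lemma ctx_cons_dec G g : ctx G = g -> g <> 0 -> exists X G0, G = X :: G0 /\ fcode X = f1 (Nat.pred g) /\ ctx G0 = f2 (Nat.pred g).
Proof.
  unfold ctx. destruct G; simpl; intros H Hg; [lia|]. subst. simpl. pairs. eauto.
Qed.

Ltac pairsall := repeat (rewrite f1_pair in * || rewrite f2_pair in *).
Ltac tgf := match goal with E : tg ?f = _ |- Inv ?f => goalinv E end.
Ltac prem a := match goal with E : a = mk _ _ _ _ _ _, H : Inv a |- _ => useinv H E end.
Ltac decC C HC := rewrite <- HC in *; destruct C; cbn [encode] in *; pairsall; try discriminate;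
   try match goal with H : pair _ _ = pair _ _ |- _ => apply pair_inj in H; destruct H; discriminate end.

Ltac rwf := repeat match goal with E : ?l = ?r |- context [?l] =>
  match l with F2 _ => rewrite E | F3 _ => rewrite E | F4 _ => rewrite E | F5 _ => rewrite E end end.

Lemma s_EV0 f : L_EV0 f = true -> Inv f.
Proof. unfold L_EV0; intro; bdes; tgf. intros C HC. decC C HC. rwf. constructor. Qed.
Lemma s_EV1 f : L_EV1 f = true -> Inv f.
Proof. unfold L_EV1; intro; bdes; tgf. intros C HC. decC C HC. rwf. constructor. Qed.
Lemma s_EV2 f : L_EV2 f = true -> Inv f.
Proof. unfold L_EV2; intro; bdes; tgf. intros C HC. decC C HC. rwf. constructor. Qed.
Lemma s_EV3 f : L_EV3 f = true -> Inv f.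
Proof. unfold L_EV3; intro; bdes; tgf. intros C HC. decC C HC. rwf. rewrite (unp (F2 f)) at 1. constructor. Qed.
Lemma s_EV4 f : L_EV4 f = true -> Inv f.
Proof. unfold L_EV4; intro; bdes; tgf. intros C HC. decC C HC. rwf. rewrite (unp (F2 f)) at 1. constructor. Qed.

Lemma unp1 v k : f1 v = k -> v = pair k (f2 v).
Proof. intro H. rewrite <- H. apply unp. Qed.
Lemma unp2 v k : f1 v = k -> v = pair k (pair (f1 (f2 v)) (f2 (f2 v))).
Proof. intro H. rewrite <- H, <- unp. apply unp. Qed.
Lemma ctx_cons X G : ctx (X :: G) = S (pair (fcode X) (ctx G)).
Proof. reflexivity. Qed.
Lemma Spred_unp g : g <> 0 -> S (pair (f1 (Nat.pred g)) (f2 (Nat.pred g))) = g.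
Proof. intro. rewrite pair_unpair. lia. Qed.

Lemma s_MU0 f : L_MU0 f = true -> Inv f.
Proof. unfold L_MU0; intro; bdes; tgf. intros C HC m Hm. lia. Qed.
Lemma s_TSvar f : L_TSvar f = true -> Inv f.
Proof.
  unfold L_TSvar; intro; bdes; tgf. exists (var (f2 (F4 f))). split.
  - cbn [tcode]. rewrite (unp (F4 f)) at 2. congruence.
  - intros U HU. rwf. cbn [tsubst]. symmetry. apply tcode_sig. auto.
Qed.
Lemma s_TSzero f : L_TSzero f = true -> Inv f.
Proof. unfold L_TSzero; intro; bdes; tgf. exists zero. split; auto; try (intros; rwf; reflexivity). Qed.
Lemma s_FSfal f : L_FSfal f = true -> Inv f.
Proof. unfold L_FSfal; intro; bdes; tgf. exists fal. split; auto; try (intros; rwf; reflexivity). Qed.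
Lemma s_SCnil f : L_SCnil f = true -> Inv f.
Proof. unfold L_SCnil; intro; bdes; tgf. exists []. split; auto. Qed.
Lemma s_TCLvar f : L_TCLvar f = true -> Inv f.
Proof.
  unfold L_TCLvar; intro; bdes; tgf. exists (var (f2 (F2 f))). split.
  - cbn [tcode]. rewrite (unp (F2 f)) at 2. congruence.
  - cbn [tclosed]. apply Nat.ltb_lt. auto.
Qed.
Lemma s_TCLzero f : L_TCLzero f = true -> Inv f.
Proof. unfold L_TCLzero; intro; bdes; tgf. exists zero. split; auto. Qed.
Lemma s_FCLfal f : L_FCLfal f = true -> Inv f.
Proof. unfold L_FCLfal; intro; bdes; tgf. exists fal. split; auto. Qed.
Lemma s_SUnil f : L_SUnil f = true -> Inv f.
Proof. unfold L_SUnil; intro; bdes; tgf. exists []. split; auto. intros B []. Qed.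

Lemma leaf_sound f : Loc0 f = true -> Inv f.
Proof.
  unfold Loc0. intro H. apply existsb_exists in H. destruct H as [r [Hin Hr]].
  cbn [leafs In] in Hin.
  repeat destruct Hin as [<-|Hin]; try contradiction;
  eauto using s_EV0, s_EV1, s_EV2, s_EV3, s_EV4, s_MU0, s_TSvar, s_TSzero, s_FSfal, s_SCnil,
    s_TCLvar, s_TCLzero, s_FCLfal, s_SUnil.
Qed.

Ltac rstart R a b c := unfold R; intros Hr Ha Hb Hc Hd; bdes;
  try prem a; try prem b; try prem c; tgf.

Lemma r_EVcomp f a b c d : R_EVcomp f a b c d = true -> Inv a -> Inv b -> Inv c -> Inv d -> Inv f.
Proof.
  rstart R_EVcomp a b c. intros C HC. decC C HC.
  eapply ev_comp; [apply Ha; reflexivity|apply Hb; reflexivity].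
Qed.
Lemma r_EVpair f a b c d : R_EVpair f a b c d = true -> Inv a -> Inv b -> Inv c -> Inv d -> Inv f.
Proof.
  rstart R_EVpair a b c. intros C HC. decC C HC. rewrite (unp (F3 f)).
  constructor; [apply Ha; reflexivity|apply Hb; reflexivity].
Qed.
Lemma r_EVrec0 f a b c d : R_EVrec0 f a b c d = true -> Inv a -> Inv b -> Inv c -> Inv d -> Inv f.
Proof.
  rstart R_EVrec0 a b c. intros C HC. decC C HC. rewrite (unp (F2 f)) at 1.
  match goal with E : f2 (F2 f) = 0 |- _ => rewrite E end.
  constructor. apply Ha; reflexivity.
Qed.
Lemma r_EVrecS f a b c d : R_EVrecS f a b c d = true -> Inv a -> Inv b -> Inv c -> Inv d -> Inv f.
Proof.
  rstart R_EVrecS a b c. intros C HC. decC C HC.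
  replace (F2 f) with (pair (f1 (F2 f)) (S (Nat.pred (f2 (F2 f))))) at 1
    by (rewrite Nat.succ_pred by auto; apply pair_unpair).
  eapply ev_recS; [apply Ha; reflexivity|apply Hb; reflexivity].
Qed.
Lemma r_EVmu f a b c d : R_EVmu f a b c d = true -> Inv a -> Inv b -> Inv c -> Inv d -> Inv f.
Proof.
  rstart R_EVmu a b c. intros C HC. decC C HC.
  constructor; [apply Ha; reflexivity|apply Hb; reflexivity].
Qed.
Lemma r_MUS f a b c d : R_MUS f a b c d = true -> Inv a -> Inv b -> Inv c -> Inv d -> Inv f.
Proof.
  rstart R_MUS a b c. intros C HC m Hm.
  destruct (Nat.eq_dec m (Nat.pred (F3 f))).
  - subst m. exists (F3 b). split; auto.
  - apply Ha; auto. lia.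
Qed.
Lemma r_TSsucc f a b c d : R_TSsucc f a b c d = true -> Inv a -> Inv b -> Inv c -> Inv d -> Inv f.
Proof.
  rstart R_TSsucc a b c. destruct Ha as [t [Ht HU]]. exists (succ t). split.
  - cbn [tcode]. rewrite Ht. symmetry. apply unp1. auto.
  - intros U HU'. cbn [tsubst tcode]. rewrite <- (HU U HU'). apply unp1. auto.
Qed.
Lemma r_TSbin n f a b c d : n = 3 \/ n = 4 -> R_TSbin n f a b c d = true -> Inv a -> Inv b -> Inv c -> Inv d -> Inv f.
Proof.
  intro Hn. rstart R_TSbin a b c. destruct Ha as [t1 [Ht1 HU1]], Hb as [t2 [Ht2 HU2]].
  destruct Hn; subst n.
  - exists (plus t1 t2). split.
    + cbn [tcode]. rewrite Ht1, Ht2. symmetry. apply unp2. auto.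
    + intros U HU. cbn [tsubst tcode]. rewrite <- (HU1 U HU), <- (HU2 U HU). apply unp2. auto.
  - exists (mult t1 t2). split.
    + cbn [tcode]. rewrite Ht1, Ht2. symmetry. apply unp2. auto.
    + intros U HU. cbn [tsubst tcode]. rewrite <- (HU1 U HU), <- (HU2 U HU). apply unp2. auto.
Qed.
Lemma r_FSeq f a b c d : R_FSeq f a b c d = true -> Inv a -> Inv b -> Inv c -> Inv d -> Inv f.
Proof.
  rstart R_FSeq a b c. destruct Ha as [t1 [Ht1 HU1]], Hb as [t2 [Ht2 HU2]].
  exists (eqf t1 t2). split.
  + cbn [fcode]. rewrite Ht1, Ht2. symmetry. apply unp2. auto.
  + intros U HU. cbn [fsubst fcode]. rewrite <- (HU1 U HU), <- (HU2 U HU). apply unp2. auto.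
Qed.
Lemma r_FSimp f a b c d : R_FSimp f a b c d = true -> Inv a -> Inv b -> Inv c -> Inv d -> Inv f.
Proof.
  rstart R_FSimp a b c. destruct Ha as [t1 [Ht1 HU1]], Hb as [t2 [Ht2 HU2]].
  exists (imp t1 t2). split.
  + cbn [fcode]. rewrite Ht1, Ht2. symmetry. apply unp2. auto.
  + intros U HU. cbn [fsubst fcode]. rewrite <- (HU1 U HU), <- (HU2 U HU). apply unp2. auto.
Qed.
Lemma r_FSall f a b c d : R_FSall f a b c d = true -> Inv a -> Inv b -> Inv c -> Inv d -> Inv f.
Proof.
  rstart R_FSall a b c. destruct Ha as [X [HX HXU]], Hb as [t [Ht HtU]].
  exists (all X). split.
  + cbn [fcode]. rewrite HX. symmetry. apply unp1. auto.
  + intros U HU. rewrite fsubst_all_sig. cbn [fcode]. rewrite <- (HXU (tshift U)).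
    * apply unp1. auto.
    * destruct HU as [HU|HU]; [left; auto|right].
      rewrite (HtU U (or_introl eq_refl)). rewrite <- Ht in HU. apply tcode_inj in HU. subst.
      rewrite <- tshift_sig. reflexivity.
Qed.
Lemma r_SCcons f a b c d : R_SCcons f a b c d = true -> Inv a -> Inv b -> Inv c -> Inv d -> Inv f.
Proof.
  rstart R_SCcons a b c. destruct Ha as [X [HX HXU]], Hb as [G0 [HG0 HG0']].
  exists (X :: G0). split.
  + rewrite ctx_cons, HX, HG0. apply Spred_unp. auto.
  + cbn [map]. rewrite ctx_cons, <- HG0', (fshift_sig zero), <- (HXU zero (or_introl eq_refl)).
    symmetry. apply Spred_unp. auto.
Qed.
Lemma r_MEMhd f a b c d : R_MEMhd f a b c d = true -> Inv a -> Inv b -> Inv c -> Inv d -> Inv f.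
Proof.
  rstart R_MEMhd a b c. destruct Ha as [G [HG _]].
  destruct (ctx_cons_dec G _ HG) as [X [G0 [-> [HX HG0]]]]; auto.
  exists (X :: G0), X. split; auto. split; [congruence|simpl; auto].
Qed.
Lemma r_MEMtl f a b c d : R_MEMtl f a b c d = true -> Inv a -> Inv b -> Inv c -> Inv d -> Inv f.
Proof.
  rstart R_MEMtl a b c. destruct Hb as [G [HG _]].
  destruct (ctx_cons_dec G _ HG) as [X [G0 [-> [HX HG0]]]]; auto.
  destruct Ha as [G1 [Y [HG1 [HY HIn]]]]. rewrite <- HG0 in HG1. apply ctx_inj in HG1. subst.
  exists (X :: G0), Y. split; auto. split; auto. simpl; auto.
Qed.
Lemma r_TCLsucc f a b c d : R_TCLsucc f a b c d = true -> Inv a -> Inv b -> Inv c -> Inv d -> Inv f.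
Proof.
  rstart R_TCLsucc a b c. destruct Ha as [t [Ht Hc1]]. exists (succ t). split; auto.
  cbn [tcode]. rewrite Ht. symmetry. apply unp1. auto.
Qed.
Lemma r_TCLbin n f a b c d : n = 3 \/ n = 4 -> R_TCLbin n f a b c d = true -> Inv a -> Inv b -> Inv c -> Inv d -> Inv f.
Proof.
  intro Hn. rstart R_TCLbin a b c. destruct Ha as [t1 [Ht1 Hc1]], Hb as [t2 [Ht2 Hc2]].
  destruct Hn; subst n; [exists (plus t1 t2)|exists (mult t1 t2)]; split; cbn [tclosed];
    try (rewrite Hc1, Hc2; reflexivity); cbn [tcode]; rewrite Ht1, Ht2; symmetry; apply unp2; auto.
Qed.
Lemma r_FCLeq f a b c d : R_FCLeq f a b c d = true -> Inv a -> Inv b -> Inv c -> Inv d -> Inv f.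
Proof.
  rstart R_FCLeq a b c. destruct Ha as [t1 [Ht1 Hc1]], Hb as [t2 [Ht2 Hc2]].
  exists (eqf t1 t2); split; cbn [fclosed];
    try (rewrite Hc1, Hc2; reflexivity); cbn [fcode]; rewrite Ht1, Ht2; symmetry; apply unp2; auto.
Qed.
Lemma r_FCLimp f a b c d : R_FCLimp f a b c d = true -> Inv a -> Inv b -> Inv c -> Inv d -> Inv f.
Proof.
  rstart R_FCLimp a b c. destruct Ha as [t1 [Ht1 Hc1]], Hb as [t2 [Ht2 Hc2]].
  exists (imp t1 t2); split; cbn [fclosed];
    try (rewrite Hc1, Hc2; reflexivity); cbn [fcode]; rewrite Ht1, Ht2; symmetry; apply unp2; auto.
Qed.
Lemma r_FCLall f a b c d : R_FCLall f a b c d = true -> Inv a -> Inv b -> Inv c -> Inv d -> Inv f.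
Proof.
  rstart R_FCLall a b c. destruct Ha as [t [Ht Hc1]]. exists (all t). split; auto.
  cbn [fcode]. rewrite Ht. symmetry. apply unp1. auto.
Qed.
Lemma r_SUcons f a b c d : R_SUcons f a b c d = true -> Inv a -> Inv b -> Inv c -> Inv d -> Inv f.
Proof.
  rstart R_SUcons a b c. destruct Ha as [G0 [HG0 HW]], Hb as [B [HB HBc]].
  exists (B :: G0). split.
  + rewrite ctx_cons, HB, HG0. apply Spred_unp. auto.
  + intros B' [<-|HB']; auto. split; auto. exists (F3 c). intros C HC. rewrite HB. apply Hc. auto.
Qed.
Lemma r_NDax f a b c d : R_NDax f a b c d = true -> Inv a -> Inv b -> Inv c -> Inv d -> Inv f.
Proof.
  rstart R_NDax a b c. destruct Ha as [G [X [HG [HX HIn]]]]. exists G, X. repeat split; auto. constructor; auto.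
Qed.
Lemma r_NDimpI f a b c d : R_NDimpI f a b c d = true -> Inv a -> Inv b -> Inv c -> Inv d -> Inv f.
Proof.
  rstart R_NDimpI a b c. destruct Ha as [G' [Y [HG' [HY Hnd]]]].
  destruct (ctx_cons_dec G' _ HG') as [X [G0 [-> [HX HG0]]]]; [lia|].
  cbn [Nat.pred] in *. pairsall.
  exists G0, (imp X Y). split; [auto|split].
  - cbn [fcode]. rewrite HX, HY. symmetry. apply unp2. auto.
  - apply nd_impI. auto.
Qed.

Ltac fdec Y HY := destruct Y; cbn [fcode] in HY; rewrite <- HY in *; pairsall; try discriminate.

Lemma r_NDimpE f a b c d : R_NDimpE f a b c d = true -> Inv a -> Inv b -> Inv c -> Inv d -> Inv f.
Proof.
  rstart R_NDimpE a b c. destruct Hb as [G2 [Y2 [HG2 [HY2 Hnd2]]]], Ha as [G1 [Y1 [HG1 [HY1 Hnd1]]]].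
  rewrite <- HG2 in HG1. apply ctx_inj in HG1. subst G1.
  destruct Y1; cbn [fcode] in HY1; apply pair_inj in HY1; destruct HY1 as [Ht HY1]; try discriminate.
  apply pair_inj in HY1. destruct HY1 as [HY1a HY1b]. rewrite <- HY2 in HY1a. apply fcode_inj in HY1a. subst.
  exists G2, Y1_2. split; [auto|split; [auto|]]. eapply nd_impE; eauto.
Qed.
Lemma r_NDallI f a b c d : R_NDallI f a b c d = true -> Inv a -> Inv b -> Inv c -> Inv d -> Inv f.
Proof.
  rstart R_NDallI a b c. destruct Ha as [G [HG HG']], Hb as [G'' [Y [HG'' [HY Hnd]]]].
  rewrite HG' in HG''. apply ctx_inj in HG''. subst.
  exists G, (all Y). split; [auto|split].
  - cbn [fcode]. rewrite HY. symmetry. apply unp1. auto.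
  - apply nd_allI. auto.
Qed.
Lemma r_NDallE f a b c d : R_NDallE f a b c d = true -> Inv a -> Inv b -> Inv c -> Inv d -> Inv f.
Proof.
  rstart R_NDallE a b c. destruct Hb as [X [HX HXU]], Ha as [G [Z [HG [HZ Hnd]]]], Hc as [t [Ht _]].
  destruct Z; cbn [fcode] in HZ; apply pair_inj in HZ; destruct HZ as [Ht' HZ]; try discriminate.
  rewrite <- HX in HZ. apply fcode_inj in HZ. subst.
  exists G, (inst X t). split; [auto|split].
  - rewrite inst_sig. symmetry. apply HXU. auto.
  - apply nd_allE. auto.
Qed.
Lemma r_NDraa f a b c d : R_NDraa f a b c d = true -> Inv a -> Inv b -> Inv c -> Inv d -> Inv f.
Proof.
  rstart R_NDraa a b c. destruct Ha as [G' [Y [HG' [HY Hnd]]]].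
  destruct (ctx_cons_dec G' _ HG') as [Z [G0 [-> [HZ HG0]]]]; [lia|].
  cbn [Nat.pred] in *. pairsall.
  destruct Z; cbn [fcode] in HZ; apply pair_inj in HZ; destruct HZ as [Ht' HZ]; try discriminate.
  apply pair_inj in HZ. destruct HZ as [HZ1 HZ2].
  destruct Z2; cbn [fcode] in HZ2; apply pair_inj in HZ2; destruct HZ2 as [Ht2 HZ2]; try discriminate.
  destruct Y; cbn [fcode] in HY; apply pair_inj in HY; destruct HY as [Ht3 HY]; try discriminate.
  exists G0, Z1. split; [auto|split; [auto|]]. apply nd_raa. exact Hnd.
Qed.
Lemma r_NDrefl f a b c d : R_NDrefl f a b c d = true -> Inv a -> Inv b -> Inv c -> Inv d -> Inv f.
Proof.
  rstart R_NDrefl a b c. destruct Ha as [t [Ht _]], Hb as [G [HG _]].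
  exists G, (eqf t t). split; [auto|split].
  - cbn [fcode]. rewrite (unp2 (F2 f) 1) by auto. congruence.
  - apply nd_refl.
Qed.
Lemma r_NDeqE f a b c d : R_NDeqE f a b c d = true -> Inv a -> Inv b -> Inv c -> Inv d -> Inv f.
Proof.
  rstart R_NDeqE a b c. destruct Ha as [G [Z [HG [HZ Hnd]]]], Hb as [G' [Y1 [HG' [HY1 Hnd1]]]], Hc as [Y HY].
  rewrite <- HG in HG'. apply ctx_inj in HG'. subst G'.
  destruct Z; cbn [fcode] in HZ; rewrite <- HZ in *; pairsall; try discriminate.
  destruct (HY s t eq_refl eq_refl) as [E1 E2].
  rewrite <- HY1 in E1. apply fcode_inj in E1. subst Y1.
  exists G, (inst Y t). split; [auto|split; [auto|]]. eapply nd_eqE; eauto.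
Qed.
Lemma r_SB f a b c d : R_SB f a b c d = true -> Inv a -> Inv b -> Inv c -> Inv d -> Inv f.
Proof.
  rstart R_SB a b c. destruct Ha as [X [HX HXU]], Hb as [X' [HX' HXU']].
  rewrite <- HX in HX'. apply fcode_inj in HX'. subst X'.
  exists X. intros S T HS HT. rewrite !inst_sig. split; [apply HXU|apply HXU']; auto.
Qed.

Lemma rule_sound z : Loc z = true -> Inv (f1 (f2 z)) -> Inv (f1 (f2 (f2 z))) -> Inv (f1 (f2 (f2 (f2 z)))) ->
  Inv (f2 (f2 (f2 (f2 z)))) -> Inv (f1 z).
Proof.
  unfold Loc. intros H Ha Hb Hc Hd. apply existsb_exists in H. destruct H as [r [Hin Hr]].
  cbn [rules In] in Hin.
  repeat destruct Hin as [<-|Hin]; try contradiction.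
  - exact (r_EVcomp _ _ _ _ _ Hr Ha Hb Hc Hd).
  - exact (r_EVpair _ _ _ _ _ Hr Ha Hb Hc Hd).
  - exact (r_EVrec0 _ _ _ _ _ Hr Ha Hb Hc Hd).
  - exact (r_EVrecS _ _ _ _ _ Hr Ha Hb Hc Hd).
  - exact (r_EVmu _ _ _ _ _ Hr Ha Hb Hc Hd).
  - exact (r_MUS _ _ _ _ _ Hr Ha Hb Hc Hd).
  - exact (r_TSsucc _ _ _ _ _ Hr Ha Hb Hc Hd).
  - exact (r_TSbin 3 _ _ _ _ _ (or_introl eq_refl) Hr Ha Hb Hc Hd).
  - exact (r_TSbin 4 _ _ _ _ _ (or_intror eq_refl) Hr Ha Hb Hc Hd).
  - exact (r_FSeq _ _ _ _ _ Hr Ha Hb Hc Hd).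
  - exact (r_FSimp _ _ _ _ _ Hr Ha Hb Hc Hd).
  - exact (r_FSall _ _ _ _ _ Hr Ha Hb Hc Hd).
  - exact (r_SCcons _ _ _ _ _ Hr Ha Hb Hc Hd).
  - exact (r_MEMhd _ _ _ _ _ Hr Ha Hb Hc Hd).
  - exact (r_MEMtl _ _ _ _ _ Hr Ha Hb Hc Hd).
  - exact (r_TCLsucc _ _ _ _ _ Hr Ha Hb Hc Hd).
  - exact (r_TCLbin 3 _ _ _ _ _ (or_introl eq_refl) Hr Ha Hb Hc Hd).
  - exact (r_TCLbin 4 _ _ _ _ _ (or_intror eq_refl) Hr Ha Hb Hc Hd).
  - exact (r_FCLeq _ _ _ _ _ Hr Ha Hb Hc Hd).
  - exact (r_FCLimp _ _ _ _ _ Hr Ha Hb Hc Hd).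
  - exact (r_FCLall _ _ _ _ _ Hr Ha Hb Hc Hd).
  - exact (r_SUcons _ _ _ _ _ Hr Ha Hb Hc Hd).
  - exact (r_NDax _ _ _ _ _ Hr Ha Hb Hc Hd).
  - exact (r_NDimpI _ _ _ _ _ Hr Ha Hb Hc Hd).
  - exact (r_NDimpE _ _ _ _ _ Hr Ha Hb Hc Hd).
  - exact (r_NDallI _ _ _ _ _ Hr Ha Hb Hc Hd).
  - exact (r_NDallE _ _ _ _ _ Hr Ha Hb Hc Hd).
  - exact (r_NDraa _ _ _ _ _ Hr Ha Hb Hc Hd).
  - exact (r_NDrefl _ _ _ _ _ Hr Ha Hb Hc Hd).
  - exact (r_NDeqE _ _ _ _ _ Hr Ha Hb Hc Hd).
  - exact (r_SB _ _ _ _ _ Hr Ha Hb Hc Hd).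
Qed.

Lemma Der_sound f : Der Loc0 Loc f -> Inv f.
Proof.
  induction 1.
  - apply leaf_sound; auto.
  - pose proof (rule_sound (prem5 f a b c d)) as R. unfold prem5 in R. pairsall. auto.
Qed.

Ltac inl := repeat match goal with
  | |- ?x = ?x \/ _ => left; reflexivity
  | |- ?x = ?x => reflexivity
  | |- _ \/ _ => right end.

Lemma DerL r f : In r leafs -> r f = true -> Der Loc0 Loc f.
Proof. intros Hin Hr. apply Der0. unfold Loc0. apply existsb_exists. eauto. Qed.
Lemma DerR r f a b c d : Der Loc0 Loc a -> Der Loc0 Loc b -> Der Loc0 Loc c -> Der Loc0 Loc d ->
  In r rules -> r f a b c d = true -> Der Loc0 Loc f.
Proof.
  intros Ha Hb Hc Hd Hin Hr. apply (DerS _ _ f a b c d); auto. unfold Loc, prem5. apply existsb_exists.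
  exists r. split; auto. pairsall. auto.
Qed.

Ltac bsolve := autorewrite with mkdb; cbn [Nat.pred]; pairsall;
  repeat (rewrite andb_true_iff; split);
  try (apply Nat.eqb_eq; reflexivity); try (apply negb_true_iff, Nat.eqb_neq; lia);
  try (apply Nat.ltb_lt; lia).
Ltac dL r := apply (DerL r); [cbn [leafs In]; inl|unfold r; bsolve].
Ltac unf r := match r with ?h _ => unfold h | _ => unfold r end.
Ltac dR r a b c d := apply (DerR r _ a b c d); [| | | |cbn [rules In]; inl|unf r; bsolve].

Lemma pair00 : pair 0 0 = 0. Proof. reflexivity. Qed.

Lemma Der_zero : Der Loc0 Loc 0.
Proof. rewrite <- pair00. dL L_EV0. Qed.
#[local] Hint Resolve Der_zero : core.

Lemma TS_comp t : forall d k U, Der Loc0 Loc (mk 2 k d (tcode U) (tcode t) (tcode (tsubst (sig d k U) t))).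
Proof.
  induction t; intros d k U; cbn [tsubst tcode].
  - dL L_TSvar. rewrite (tcode_sig d k U (tcode U) n (or_intror eq_refl)). apply Nat.eqb_refl.
  - dL L_TSzero.
  - dR R_TSsucc (mk 2 k d (tcode U) (tcode t) (tcode (tsubst (sig d k U) t))) 0 0 0; auto.
  - dR (R_TSbin 3) (mk 2 k d (tcode U) (tcode t1) (tcode (tsubst (sig d k U) t1)))
      (mk 2 k d (tcode U) (tcode t2) (tcode (tsubst (sig d k U) t2))) 0 0; auto.
  - dR (R_TSbin 4) (mk 2 k d (tcode U) (tcode t1) (tcode (tsubst (sig d k U) t1)))
      (mk 2 k d (tcode U) (tcode t2) (tcode (tsubst (sig d k U) t2))) 0 0; auto.
Qed.

Lemma TS_shift U : Der Loc0 Loc (mk 2 0 0 0 (tcode U) (tcode (tshift U))).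
Proof. pose proof (TS_comp U 0 0 (var 0)). cbn [tcode] in H. rewrite pair00 in H. rewrite (tshift_sig (var 0)). exact H. Qed.

Lemma FS_comp X : forall d k U, Der Loc0 Loc (mk 3 k d (tcode U) (fcode X) (fcode (fsubst (sig d k U) X))).
Proof.
  induction X; intros d k U.
  - cbn [fsubst fcode]. dL L_FSfal.
  - cbn [fsubst fcode]. dR R_FSeq (mk 2 k d (tcode U) (tcode s) (tcode (tsubst (sig d k U) s)))
      (mk 2 k d (tcode U) (tcode t) (tcode (tsubst (sig d k U) t))) 0 0; auto using TS_comp.
  - cbn [fsubst fcode]. dR R_FSimp (mk 3 k d (tcode U) (fcode X1) (fcode (fsubst (sig d k U) X1)))
      (mk 3 k d (tcode U) (fcode X2) (fcode (fsubst (sig d k U) X2))) 0 0; auto.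
  - rewrite fsubst_all_sig. cbn [fcode].
    dR R_FSall (mk 3 k (S d) (tcode (tshift U)) (fcode X) (fcode (fsubst (sig (S d) k (tshift U)) X)))
      (mk 2 0 0 0 (tcode U) (tcode (tshift U))) 0 0; auto using TS_shift.
Qed.

Lemma FS_shift X : Der Loc0 Loc (mk 3 0 0 (pair 1 0) (fcode X) (fcode (fshift X))).
Proof. rewrite (fshift_sig zero). exact (FS_comp X 0 0 zero). Qed.
Lemma FS_inst X t : Der Loc0 Loc (mk 3 1 0 (tcode t) (fcode X) (fcode (inst X t))).
Proof. rewrite inst_sig. exact (FS_comp X 0 1 t). Qed.

Lemma SC_comp G : Der Loc0 Loc (mk 4 (ctx G) (ctx (map fshift G)) 0 0 0).
Proof.
  induction G as [|X G IH].
  - cbn. dL L_SCnil.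
  - cbn [map]. rewrite !ctx_cons.
    dR R_SCcons (mk 3 0 0 (pair 1 0) (fcode X) (fcode (fshift X))) (mk 4 (ctx G) (ctx (map fshift G)) 0 0 0) 0 0;
    auto using FS_shift.
Qed.

Lemma MEM_comp X G : In X G -> Der Loc0 Loc (mk 5 (fcode X) (ctx G) 0 0 0).
Proof.
  induction G as [|Y G IH]; intro H; [destruct H|].
  destruct H as [->|H].
  - rewrite ctx_cons. dR R_MEMhd (mk 4 (ctx (X :: G)) (ctx (map fshift (X :: G))) 0 0 0) 0 0 0; auto using SC_comp.
  - rewrite ctx_cons. dR R_MEMtl (mk 5 (fcode X) (ctx G) 0 0 0) (mk 4 (ctx (Y :: G)) (ctx (map fshift (Y :: G))) 0 0 0) 0 0;
    auto using SC_comp.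
Qed.

Lemma TCL_comp t : forall k, tclosed k t = true -> Der Loc0 Loc (mk 6 k (tcode t) 0 0 0).
Proof.
  induction t; intros k H; cbn [tcode tclosed] in *.
  - apply Nat.ltb_lt in H. dL L_TCLvar.
  - dL L_TCLzero.
  - dR R_TCLsucc (mk 6 k (tcode t) 0 0 0) 0 0 0; auto.
  - apply andb_true_iff in H. destruct H.
    dR (R_TCLbin 3) (mk 6 k (tcode t1) 0 0 0) (mk 6 k (tcode t2) 0 0 0) 0 0; auto.
  - apply andb_true_iff in H. destruct H.
    dR (R_TCLbin 4) (mk 6 k (tcode t1) 0 0 0) (mk 6 k (tcode t2) 0 0 0) 0 0; auto.
Qed.
Lemma FCL_comp X : forall k, fclosed k X = true -> Der Loc0 Loc (mk 7 k (fcode X) 0 0 0).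
Proof.
  induction X; intros k H; cbn [fcode fclosed] in *.
  - dL L_FCLfal.
  - apply andb_true_iff in H. destruct H.
    dR R_FCLeq (mk 6 k (tcode s) 0 0 0) (mk 6 k (tcode t) 0 0 0) 0 0; auto using TCL_comp.
  - apply andb_true_iff in H. destruct H.
    dR R_FCLimp (mk 7 k (fcode X1) 0 0 0) (mk 7 k (fcode X2) 0 0 0) 0 0; auto.
  - dR R_FCLall (mk 7 (S k) (fcode X) 0 0 0) 0 0 0; auto.
Qed.

#[local] Hint Resolve Der_zero : core.

Lemma MU_comp f x n : (forall m, m < n -> exists v, v <> 0 /\ Der Loc0 Loc (mk 0 f (pair x m) v 0 0)) ->
  Der Loc0 Loc (mk 1 f x n 0 0).
Proof.
  induction n; intro H.
  - dL L_MU0.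
  - destruct (H n) as [v [Hv Dv]]; [lia|].
    dR R_MUS (mk 1 f x n 0 0) (mk 0 f (pair x n) v 0 0) 0 0; auto.
Qed.

Lemma EV_rec C1 C2 (IH1 : forall x y, eval C1 x y -> Der Loc0 Loc (mk 0 (encode C1) x y 0 0))
  (IH2 : forall x y, eval C2 x y -> Der Loc0 Loc (mk 0 (encode C2) x y 0 0)) :
  forall n x y, eval (cRec C1 C2) (pair x n) y -> Der Loc0 Loc (mk 0 (encode (cRec C1 C2)) (pair x n) y 0 0).
Proof.
  induction n; intros x y H; inversion H; subst;
    repeat match goal with H : pair _ _ = pair _ _ |- _ => apply pair_inj in H; destruct H; subst end; try lia;
    cbn [encode].
  - dR R_EVrec0 (mk 0 (encode C1) x y 0 0) 0 0 0; auto.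
  - match goal with E : S _ = S _ |- _ => injection E; intro; subst end.
    match goal with E1 : eval (cRec _ _) _ ?r |- _ =>
      dR R_EVrecS (mk 0 (pair 7 (pair (encode C1) (encode C2))) (pair x n) r 0 0)
         (mk 0 (encode C2) (pair x (pair n r)) y 0 0) 0 0 end; auto.
Qed.

Lemma EV_comp C : forall x y, eval C x y -> Der Loc0 Loc (mk 0 (encode C) x y 0 0).
Proof.
  induction C; intros x y H.
  8: { inversion H; subst; apply EV_rec; auto. }
  all: cbn [encode].
  - inversion H; subst. dL L_EV0.
  - inversion H; subst. dL L_EV1.
  - inversion H; subst. dL L_EV2.
  - inversion H; subst. dL L_EV3.
  - inversion H; subst. dL L_EV4.
  - inversion H; subst.
    dR R_EVcomp (mk 0 (encode C2) x y0 0 0) (mk 0 (encode C1) y0 y 0 0) 0 0; auto.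
  - inversion H; subst.
    dR R_EVpair (mk 0 (encode C1) x a 0 0) (mk 0 (encode C2) x b 0 0) 0 0; auto.
  - inversion H; subst.
    dR R_EVmu (mk 0 (encode C) (pair x y) 0 0 0) (mk 1 (encode C) x y 0 0) 0 0; auto.
    apply MU_comp. intros m Hm. match goal with Hf : forall m, m < y -> _ |- _ => destruct (Hf m Hm) as [v [Hv Ev]] end. eauto.
Qed.

Lemma SU_comp e G : (forall B, In B G -> sentence B /\ exists C y, encode C = e /\ eval C (fcode B) y) ->
  Der Loc0 Loc (mk 8 e (ctx G) 0 0 0).
Proof.
  induction G as [|B G IH]; intro H.
  - cbn. dL L_SUnil.
  - rewrite ctx_cons. destruct (H B (or_introl eq_refl)) as [HB [C [y [HC Ev]]]].
    dR R_SUcons (mk 8 e (ctx G) 0 0 0) (mk 7 0 (fcode B) 0 0 0) (mk 0 e (fcode B) y 0 0) 0; auto.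
    + apply IH. intros; apply H; simpl; auto.
    + apply FCL_comp. exact HB.
    + subst. apply EV_comp. auto.
Qed.

Lemma ND_comp G X : nd G X -> Der Loc0 Loc (mk 9 (ctx G) (fcode X) 0 0 0).
Proof.
  induction 1.
  - dR R_NDax (mk 5 (fcode A) (ctx G) 0 0 0) 0 0 0; auto using MEM_comp.
  - cbn [fcode]. rewrite ctx_cons in IHnd.
    dR R_NDimpI (mk 9 (S (pair (fcode A) (ctx G))) (fcode B) 0 0 0) 0 0 0; auto.
  - dR R_NDimpE (mk 9 (ctx G) (fcode (imp A B)) 0 0 0) (mk 9 (ctx G) (fcode A) 0 0 0) 0 0; auto.
  - cbn [fcode].
    dR R_NDallI (mk 4 (ctx G) (ctx (map fshift G)) 0 0 0) (mk 9 (ctx (map fshift G)) (fcode A) 0 0 0) 0 0;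
    auto using SC_comp.
  - dR R_NDallE (mk 9 (ctx G) (fcode (all A)) 0 0 0) (mk 3 1 0 (tcode t) (fcode A) (fcode (inst A t)))
      (mk 2 0 0 0 (tcode t) (tcode (tshift t))) 0; auto using FS_inst, TS_shift.
  - cbn [fcode ctx map encl neg] in *.
    dR R_NDraa (mk 9 (S (pair (pair 2 (pair (fcode A) (pair 0 0))) (ctx G))) (pair 0 0) 0 0 0) 0 0 0; auto.
  - cbn [fcode].
    dR R_NDrefl (mk 2 0 0 0 (tcode t) (tcode (tshift t))) (mk 4 (ctx G) (ctx (map fshift G)) 0 0 0) 0 0;
    auto using TS_shift, SC_comp.
  - cbn [fcode] in IHnd1. dR R_NDeqE (mk 9 (ctx G) (pair 1 (pair (tcode s) (tcode t))) 0 0 0) (mk 9 (ctx G) (fcode (inst A s)) 0 0 0)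
      (mk 10 (tcode s) (tcode t) (fcode (inst A s)) (fcode (inst A t)) 0) 0; auto.
    dR R_SB (mk 3 1 0 (tcode s) (fcode A) (fcode (inst A s))) (mk 3 1 0 (tcode t) (fcode A) (fcode (inst A t))) 0 0;
    auto using FS_inst.
Qed.

Lemma EV_sound c x y : Der Loc0 Loc (mk 0 c x y 0 0) -> forall C, encode C = c -> eval C x y.
Proof. intro H. apply Der_sound in H. unfold Inv in H. autorewrite with mkdb in H. exact H. Qed.
Lemma SU_sound e g : Der Loc0 Loc (mk 8 e g 0 0 0) -> InvSU e g.
Proof. intro H. apply Der_sound in H. unfold Inv in H. autorewrite with mkdb in H. exact H. Qed.
Lemma ND_sound g X : Der Loc0 Loc (mk 9 g X 0 0 0) -> InvND g X.
Proof. intro H. apply Der_sound in H. unfold Inv in H. autorewrite with mkdb in H. exact H. Qed.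

Lemma repb_comp P f : repb P -> rep f -> repb (fun z => P (f z)).
Proof. intros. unfold repb in *. apply (rep_comp1 (fun z => b2n (P z)) f); auto. Qed.

Fixpoint cc n := match n with 0 => cZero | S n => cComp cSucc (cc n) end.
Lemma eval_cc n x : eval (cc n) x n.
Proof. induction n; simpl; econstructor; eauto; constructor. Qed.
Definition ecc n := encode (cc n).
Lemma rep_ecc : rep ecc.
Proof.
  assert (H : rep (fun z => R (fun _ => pair 0 0) (fun w => pair 5 (pair (pair 1 0) (f2 (f2 w)))) (f1 z) (f2 z))).
  { apply rep_rec; rep_auto. }
  eapply rep_ext; [|apply (rep_comp1 _ (fun z => pair 0 z) H)].
  - intro z. cbv beta. pairs. induction z; simpl; auto. pairs. rewrite IHz. reflexivity.
  - rep_auto.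
Qed.

Ltac rep_step2 := first [ rep_step
  | match goal with
    | |- repb (fun z => Loc0 (@?f z)) => apply (repb_comp Loc0 f repb_Loc0)
    | |- repb (fun z => Loc (@?f z)) => apply (repb_comp Loc f repb_Loc)
    | |- rep (fun z => ecc (@?f z)) => apply (rep_comp1 ecc f rep_ecc)
    end ].
Ltac rep_auto2 := repeat rep_step2.

Section Machine.
Variables (p e a cnA : nat).

Definition Check n x w :=
  (negb (x =? cnA) && validb Loc0 Loc (f1 (f2 w)) (f2 (f2 w)) && memb (mk 0 e x (f1 w) 0 0) (f1 (f2 w)) (f2 (f2 w))) ||
  ((x =? cnA) && validb Loc0 Loc (f1 (f2 w)) (f2 (f2 w)) &&
    memb (mk 0 p n (f1 (f1 w)) 0 0) (f1 (f2 w)) (f2 (f2 w)) &&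
    memb (mk 8 e (f2 (f1 w)) 0 0 0) (f1 (f2 w)) (f2 (f2 w)) &&
    memb (mk 9 (f2 (f1 w)) (pair 2 (pair (f1 (f1 w)) a)) 0 0 0) (f1 (f2 w)) (f2 (f2 w))).
Definition Kf z := if Check (f1 (f1 z)) (f2 (f1 z)) (f2 z) then 0 else 1.

Lemma rep_Kf : rep Kf.
Proof. unfold Kf, Check, validb, memb, mk, nthc. rep_auto2. Qed.

End Machine.

Lemma least_ex (P : nat -> bool) n : P n = true -> exists w, P w = true /\ forall m, m < w -> P m = false.
Proof.
  revert n. induction n as [n IH] using (well_founded_induction lt_wf). intro Hn.
  destruct (bex n P) eqn:E.
  - apply bex_iff in E. destruct E as [m [Hm E]]. apply (IH m Hm E).
  - exists n. split; auto. intros m Hm. destruct (P m) eqn:Pm; auto.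
    assert (bex n P = true) by (apply bex_iff; eauto). congruence.
Qed.

Lemma mu_halt K kf : (forall z, eval K z (kf z)) ->
  forall z, (exists y, eval (cMu K) z y) <-> exists w, kf (pair z w) = 0.
Proof.
  intros HK z. split.
  - intros [y Hy]. inversion Hy; subst. exists y. eapply eval_det; eauto.
  - intros [w Hw]. destruct (least_ex (fun w => kf (pair z w) =? 0) w) as [n [Hn Hl]].
    + apply Nat.eqb_eq; auto.
    + exists n. constructor.
      * apply Nat.eqb_eq in Hn. rewrite <- Hn. auto.
      * intros m Hm. exists (kf (pair z m)). split; auto. specialize (Hl m Hm). apply Nat.eqb_neq in Hl. auto.
Qed.

Definition diag mM a := pair 5 (pair mM (pair 6 (pair (pair 5 (pair a (ecc a))) (encode cId)))).

Lemma quine M : exists Cq, forall x y, eval Cq x y <-> eval M (pair (encode Cq) x) y.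
Proof.
  assert (Hd : rep (diag (encode M))) by (unfold diag; rep_auto2).
  destruct Hd as [Dg HDg].
  set (a0 := encode Dg).
  exists (cComp M (cPair (cComp Dg (cc a0)) cId)).
  assert (E : encode (cComp M (cPair (cComp Dg (cc a0)) cId)) = diag (encode M) a0) by reflexivity.
  rewrite E. intros x y. split.
  - intro H. inversion H; subst.
    match goal with Hp : eval (cPair _ _) _ _ |- _ => inversion Hp; subst end.
    match goal with Hi : eval cId _ _ |- _ => inversion Hi; subst end.
    match goal with Hc : eval (cComp Dg (cc a0)) _ ?a |- _ =>
      assert (a = diag (encode M) a0); [inversion Hc; subst|] end.
    { match goal with Hcc : eval (cc a0) _ ?y1 |- _ =>
        assert (y1 = a0) by (eapply eval_det; [exact Hcc|apply eval_cc]) end. subst.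
      eapply eval_det; eauto. }
    subst. assumption.
  - intro H. econstructor; [|exact H]. constructor; [|constructor].
    econstructor; [apply eval_cc|apply HDg].
Qed.

Lemma nd_weak G X : nd G X -> forall G', incl G G' -> nd G' X.
Proof.
  induction 1; intros G' Hi.
  - apply nd_ax. auto.
  - apply nd_impI. apply IHnd. intros x [<-|Hx]; simpl; auto.
  - eapply nd_impE; eauto.
  - apply nd_allI. apply IHnd. apply incl_map. auto.
  - apply nd_allE. auto.
  - apply nd_raa. apply IHnd. intros x [<-|Hx]; simpl; auto.
  - apply nd_refl.
  - eapply nd_eqE; eauto.
Qed.

Lemma prov_transfer T S X : same_theory T S -> Provable T X -> Provable S X.
Proof. intros H [G [HG Hnd]]. exists G. split; auto. intros B HB. apply H, HG, HB. Qed.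

Lemma term_eq_dec (s t : term) : {s = t} + {s <> t}.
Proof. decide equality; apply Nat.eq_dec. Qed.
Lemma form_eq_dec (A B : form) : {A = B} + {A <> B}.
Proof. decide equality; apply term_eq_dec. Qed.

Definition Cond2 p e a n := exists b g, Der Loc0 Loc (mk 0 p n b 0 0) /\ Der Loc0 Loc (mk 8 e g 0 0 0) /\
  Der Loc0 Loc (mk 9 g (pair 2 (pair b a)) 0 0 0).

Lemma Check_spec p Ce a cnA n x : (exists w, Check p (encode Ce) a cnA n x w = true) <->
  (x <> cnA /\ exists y, eval Ce x y) \/ (x = cnA /\ Cond2 p (encode Ce) a n).
Proof.
  split.
  - intros [w Hw]. unfold Check in Hw. apply orb_true_iff in Hw. destruct Hw as [Hw|Hw]; bdes.
    + left. split; auto. exists (f1 w). eapply EV_sound; [|reflexivity]. eapply memb_Der; eauto.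
    + right. split; auto. exists (f1 (f1 w)), (f2 (f1 w)). repeat split; eapply memb_Der; eauto.
  - intros [[Hx [y Hy]]|[Hx [b [g [D1 [D2 D3]]]]]].
    + apply EV_comp in Hy. destruct (Der_witness3 _ _ _ _ _ Hy Hy Hy) as [k [c [V [M _]]]].
      exists (pair y (pair k c)). unfold Check. pairs. apply orb_true_iff. left.
      rewrite V, M. apply Nat.eqb_neq in Hx. rewrite Hx. reflexivity.
    + destruct (Der_witness3 _ _ _ _ _ D1 D2 D3) as [k [c [V [M1 [M2 M3]]]]].
      exists (pair (pair b g) (pair k c)). unfold Check. pairs. apply orb_true_iff. right.
      rewrite V, M1, M2, M3. subst. rewrite Nat.eqb_refl. reflexivity.
Qed.

Lemma phi_enc C x y : phi (encode C) x y <-> eval C x y.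
Proof.
  split.
  - intros [c [Hc H]]. apply encode_inj in Hc. subst. auto.
  - intro H. exists C. auto.
Qed.

Lemma good_index U e0 : same_theory (W e0) U -> exists Ce, same_theory (W (encode Ce)) U.
Proof.
  intro He. destruct (classic (exists C, encode C = e0)) as [[C HC]|N].
  - exists C. rewrite HC. auto.
  - exists (cMu cSucc). intro B. rewrite <- (He B). unfold W. split.
    + intros [_ [y Hy]]. apply phi_enc in Hy. inversion Hy; subst.
      match goal with H : eval cSucc _ 0 |- _ => inversion H end.
    + intros [_ [y [c [Hc _]]]]. exfalso. apply N. eauto.
Qed.

Theorem mainTheorem17 (U : theory) (p : nat)
  (HUce : exists e, same_theory (W e) U)
  (HUcon : Consistent U)
  (HPhi : forall i, finite_extension (W i) U -> Consistent (W i) ->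
     exists A, PhiVal p i A /\ ~ Provable U A /\ ~ Provable (W i) (neg A)) :
  forall i, same_theory (W i) U ->
    exists j Aj Ai, same_theory (W j) U /\ PhiVal p j Aj /\ PhiVal p i Ai /\
      ~ Provable U (imp Aj Ai).
Proof.
  intros i Hi.
  assert (FEU : forall k, same_theory (W k) U -> finite_extension (W k) U).
  { intros k Hk. exists []. split; [intros ? []|]. intro B. rewrite (Hk B). simpl. tauto. }
  assert (CU : forall k, same_theory (W k) U -> Consistent (W k)).
  { intros k Hk H. apply HUcon. eapply prov_transfer; eauto. }
  destruct (HPhi i (FEU i Hi) (CU i Hi)) as [A [[HAs HAphi] [HUA HiA]]].
  assert (HUnA : ~ Provable U (neg A)).
  { intro H. apply HiA. eapply prov_transfer; [|exact H]. intro B. rewrite (Hi B). tauto. }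
  destruct HAphi as [Cp [HCp HCpe]].
  destruct HUce as [e0 He0]. destruct (good_index U e0 He0) as [Ce He].
  set (e := encode Ce) in *.
  set (a := fcode A). set (cnA := fcode (neg A)).
  destruct (rep_Kf p e a cnA) as [K HK].
  destruct (quine (cMu K)) as [Cq HCq]. set (j := encode Cq).
  assert (Key : forall x, (exists y, phi j x y) <-> (x <> cnA /\ exists y, eval Ce x y) \/ (x = cnA /\ Cond2 p e a j)).
  { intro x. pose proof (Check_spec p Ce a cnA j x) as CS. fold e in CS. rewrite <- CS. split.
    - intros [y Hy]. apply phi_enc, HCq in Hy. destruct (proj1 (mu_halt K _ HK _) (ex_intro _ y Hy)) as [w Hw].
      exists w. unfold Kf in Hw. repeat (rewrite f1_pair in Hw || rewrite f2_pair in Hw). fold j in Hw. destruct (Check p e a cnA j x w); [reflexivity|discriminate Hw].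
    - intros [w Hw]. destruct (proj2 (mu_halt K _ HK (pair j x))) as [y Hy].
      + exists w. unfold Kf. pairs. rewrite Hw. reflexivity.
      + exists y. apply phi_enc, HCq. exact Hy. }
  assert (HsnA : sentence (neg A)) by (unfold sentence, neg in *; simpl; rewrite HAs; reflexivity).
  assert (WjC : forall C, W j C <-> (U C /\ C <> neg A) \/ (C = neg A /\ Cond2 p e a j)).
  { intro C. unfold W at 1. rewrite Key. split.
    - intros [HC [[Hx [y Hy]]|[Hx Hc]]].
      + left. split.
        * apply He. split; auto. exists y. apply phi_enc. auto.
        * intro E. apply Hx. subst. reflexivity.
      + right. apply fcode_inj in Hx. auto.
    - intros [[HUC Hn]|[-> Hc]].
      + apply He in HUC. destruct HUC as [HC [y Hy]]. split; auto. left. split.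
        * intro E. apply fcode_inj in E. auto.
        * exists y. apply phi_enc. auto.
      + split; auto. }
  destruct (classic (Cond2 p e a j)) as [HC2|HC2].
  - exfalso. destruct HC2 as [b [g [D1 [D2 D3]]]].
    pose proof (EV_sound _ _ _ D1 Cp HCp) as Eb.
    destruct (SU_sound _ _ D2) as [G [HG HGU]].
    destruct (ND_sound _ _ D3) as [G' [Y [HG' [HY Hnd]]]].
    rewrite <- HG in HG'. apply ctx_inj in HG'. subst G'.
    destruct Y; cbn [fcode] in HY; apply pair_inj in HY; destruct HY as [Ht HY]; try discriminate.
    apply pair_inj in HY. destruct HY as [HY1 HY2]. apply fcode_inj in HY2. subst Y2.
    assert (GU : forall B, In B G -> U B).
    { intros B HB. destruct (HGU B HB) as [Hs [y Hy]]. apply He. split; auto. exists y. apply phi_enc. apply Hy. reflexivity. }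
    assert (UWj : forall B, U B -> W j B).
    { intros B HB. apply WjC. destruct (form_eq_dec B (neg A)) as [->|Hn]; [right|left]; auto.
      split; auto. exists b, g. auto. }
    assert (FEj : finite_extension (W j) U).
    { exists [neg A]. split; [intros B [<-|[]]; auto|]. intro B. rewrite WjC. simpl.
      split; [intros [[? ?]|[? ?]]; auto|].
      intros [HB|[<-|[]]]; [|right; split; auto; exists b, g; auto].
      destruct (form_eq_dec B (neg A)) as [->|Hn]; [right; split; auto; exists b, g; auto|left; auto]. }
    assert (Cj : Consistent (W j)).
    { intros [G0 [HG0 Hnd0]]. apply HUA.
      exists (filter (fun B => if form_eq_dec B (neg A) then false else true) G0). split.
      - intros B HB. apply filter_In in HB. destruct HB as [HB Hf].
        destruct (form_eq_dec B (neg A)); [discriminate|].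
        apply HG0, WjC in HB. destruct HB as [[? ?]|[? ?]]; [auto|contradiction].
      - apply nd_raa. eapply nd_weak; [exact Hnd0|]. intros B HB.
        destruct (form_eq_dec B (neg A)) as [->|Hn]; [left; auto|right].
        apply filter_In. split; auto. destruct (form_eq_dec B (neg A)); [contradiction|reflexivity]. }
    destruct (HPhi j FEj Cj) as [A' [[HA's HA'phi] [_ HjA']]].
    assert (Hb : b = fcode A') by (eapply phi_det; [exists Cp; split; eauto|exact HA'phi]).
    rewrite Hb in HY1. apply fcode_inj in HY1. subst Y1.
    apply HjA'. exists (neg A :: G). split.
    + intros B [<-|HB]; [apply WjC; right; split; auto; exists b, g; auto|apply UWj, GU, HB].
    + apply nd_impI. apply (nd_impE _ A fal); [apply nd_ax; simpl; auto|].
      apply (nd_impE _ A' A); [|apply nd_ax; simpl; auto].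
      eapply nd_weak; [exact Hnd|]. intros B HB; simpl; auto.
  - assert (Hj : same_theory (W j) U).
    { intro C. rewrite WjC. split.
      - intros [[? ?]|[? ?]]; [auto|contradiction].
      - intro HC. left. split; auto. intro E. subst. apply HUnA. exists [neg A]. split.
        + intros B [<-|[]]; auto.
        + apply nd_ax. simpl; auto. }
    destruct (HPhi j (FEU j Hj) (CU j Hj)) as [B [HB _]].
    exists j, B, A. refine (conj Hj (conj HB (conj _ _))); [split; auto; exists Cp; split; auto|].
    intros [G [HG Hnd]]. apply HC2.
    destruct HB as [HBs [Cp' [HCp' EB]]].
    exists (fcode B), (ctx G). repeat split.
    + rewrite <- HCp'. apply EV_comp. auto.
    + apply SU_comp. intros B' HB'. specialize (HG B' HB'). apply He in HG. destruct HG as [Hs [y Hy]]. split; auto.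
      exists Ce, y. split; auto. apply phi_enc. auto.
    + apply (ND_comp _ _ Hnd).
Qed.
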